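(* Let $\delta=\delta(q)$ be a function taking values in $(0,1/2)$ such that $\frac{1}{\delta(q)}\cdot\frac{\log\log\log q}{\log\log q}\to 0$ as $q\to\infty$. Then there are absolute constants $c_0 \geq 1$ and $C>0$ such that for every sufficiently large prime $q$, the number of integers $1\le n<q$ that can be written as $n=mk$ with positive integers $m\le q^{\delta/10}$ and $k$ such that every prime $p\mid k$ satisfies $q^{\delta/10}<p\le q^{\delta}$ is at least $C\,\rho(1/\delta)\, c_0^{-1/\delta}\, q$.
   Context: $\rho$ is the Dickman–de Bruijn function: the unique continuous solution of $u\rho'(u)+\rho(u-1)=0$ for $u>1$ with $\rho(u)=1$ on $[0,1]$. *)

(* Defs.v *)
From Stdlib Require Import Reals Lra Lia ZArith Znumtheory List ClassicalEpsilon.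
Open Scope R_scope.

Definition is_dickman (rho : R -> R) : Prop :=
  (forall u, 0 <= u <= 1 -> rho u = 1) /\
  (forall u, 0 < u -> continuity_pt rho u) /\
  (forall u, 1 < u -> derivable_pt_lim rho u (- rho (u - 1) / u)).

Definition good (q : nat) (d : R) (n : nat) : Prop :=
  exists m k : nat, (1 <= m)%nat /\ (1 <= k)%nat /\ n = (m * k)%nat /\
    INR m <= Rpower (INR q) (d / 10) /\
    (forall p : nat, prime (Z.of_nat p) -> Nat.divide p k ->
       Rpower (INR q) (d / 10) < INR p <= Rpower (INR q) d).

Definition dec_prop (P : Prop) : bool :=
  if excluded_middle_informative P then true else false.

Definition count_good (q : nat) (d : R) : nat :=
  length (filter (fun n => dec_prop (good q d n)) (seq 1 (q - 1))).

(* Main.v *)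
Require Import Defs.
From Stdlib Require Import Reals Lra Lia ZArith Znumtheory List ClassicalEpsilon.
From Coquelicot Require Import Coquelicot.
Open Scope R_scope.

Module RhoPart.

Lemma nat_above (x : R) : exists n : nat, x < INR n.
Proof.
  destruct (archimed x) as [H1 H2].
  destruct (Z_lt_le_dec 0 (up x)) as [Hp|Hn].
  - exists (Z.to_nat (up x)). rewrite INR_IZR_INZ, Z2Nat.id; [lra | lia].
  - exists 0%nat. simpl. apply IZR_le in Hn. lra.
Qed.

Lemma exp_pow_INR (x : R) (n : nat) : exp x ^ n = exp (INR n * x).
Proof.
  induction n; simpl. rewrite Rmult_0_l, exp_0; auto.
  rewrite IHn. rewrite <- exp_plus. f_equal. destruct n; simpl; lra.
Qed.

Lemma exp_le x y : x <= y -> exp x <= exp y.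
Proof. intro H. destruct H. left; apply exp_increasing; auto. subst; lra. Qed.

Definition rt (rho : R -> R) (x : R) := rho (Rmax 0 x).

Lemma locally_lt (x b : R) : x < b -> locally x (fun y => y < b).
Proof.
  intro H. assert (He : 0 < b - x) by lra. exists (mkposreal _ He).
  intros y Hy. unfold ball in Hy; simpl in Hy. unfold AbsRing_ball, abs, minus, plus, opp in Hy; simpl in Hy.
  apply Rabs_lt_between' in Hy. lra.
Qed.

Lemma locally_gt (x b : R) : b < x -> locally x (fun y => b < y).
Proof.
  intro H. assert (He : 0 < x - b) by lra. exists (mkposreal _ He).
  intros y Hy. unfold ball in Hy; simpl in Hy. unfold AbsRing_ball, abs, minus, plus, opp in Hy; simpl in Hy.
  apply Rabs_lt_between' in Hy. lra.
Qed.

Lemma rt_cont rho : is_dickman rho -> forall x, continuous (rt rho) x.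
Proof.
  intros [H1 [H2 H3]] x.
  destruct (Rlt_or_le x 1) as [Hx|Hx].
  - apply continuous_ext_loc with (fun _ => 1).
    + generalize (locally_lt x 1 Hx). apply filter_imp. intros y Hy.
      unfold rt. rewrite H1; auto. split. apply Rmax_l. apply Rmax_lub; lra.
    + apply continuous_const.
  - apply continuous_ext_loc with rho.
    + generalize (locally_gt x 0 ltac:(lra)). apply filter_imp. intros y Hy.
      unfold rt. rewrite Rmax_right; lra.
    + apply continuity_pt_filterlim. apply H2. lra.
Qed.

Definition PP (rho : R -> R) (x : R) := RInt (rt rho) 0 x.

Lemma PP_deriv rho : is_dickman rho -> forall x, is_derive (PP rho) x (rt rho x).
Proof.
  intros Hd x. apply is_derive_RInt with 0.
  - apply filter_forall. intro b. apply RInt_correct. apply ex_RInt_continuous.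
    intros; apply rt_cont; auto.
  - apply rt_cont; auto.
Qed.

Lemma PP_cont rho : is_dickman rho -> forall x, continuity_pt (PP rho) x.
Proof.
  intros Hd x. apply derivable_continuous_pt. exists (rt rho x).
  apply is_derive_Reals. apply PP_deriv; auto.
Qed.

Lemma PP_mvt rho : is_dickman rho -> forall a b, a <= b ->
  exists c, a <= c <= b /\ PP rho b - PP rho a = rt rho c * (b - a).
Proof.
  intros Hd a b Hab.
  destruct (MVT_gen (PP rho) a b (rt rho)) as [c [Hc He]].
  - intros; apply PP_deriv; auto.
  - intros; apply PP_cont; auto.
  - rewrite Rmin_left in Hc; auto. rewrite Rmax_right in Hc; auto. exists c; auto.
Qed.

Lemma PP_0 rho : PP rho 0 = 0.
Proof. unfold PP. rewrite RInt_point. reflexivity. Qed.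

Lemma PP_1 rho : is_dickman rho -> PP rho 1 = 1.
Proof.
  intros [H1 _]. unfold PP. rewrite (RInt_ext _ (fun _ => 1)).
  - rewrite RInt_const. unfold scal; simpl. unfold mult; simpl. lra.
  - intros x Hx. rewrite Rmin_left in Hx by lra. rewrite Rmax_right in Hx by lra.
    unfold rt. rewrite Rmax_right by lra. apply H1; lra.
Qed.

Lemma rt_pos rho x : 0 <= x -> rt rho x = rho x.
Proof. intro; unfold rt; rewrite Rmax_right; auto. Qed.

Lemma ident rho : is_dickman rho -> forall u, 1 <= u -> u * rho u = PP rho u - PP rho (u - 1).
Proof.
  intros Hd u Hu. pose proof Hd as [H1 [H2 H3]].
  set (G := fun u => u * rho u - PP rho u + PP rho (u - 1)).
  destruct (MVT_gen G 1 u (fun _ => 0)) as [c [Hc He]].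
  - intros x Hx. rewrite Rmin_left in Hx by lra. rewrite Rmax_right in Hx by lra.
    apply is_derive_Reals.
    replace 0 with ((1 * rho x + x * (- rho (x - 1) / x)) - rt rho x + rt rho (x - 1) * (1 - 0)).
    2:{ rewrite !rt_pos by lra. field. lra. }
    apply (derivable_pt_lim_plus (fun u => u * rho u - PP rho u) (fun u => PP rho (u - 1))).
    + apply (derivable_pt_lim_minus (fun u => u * rho u) (PP rho)).
      * apply (derivable_pt_lim_mult id rho). apply derivable_pt_lim_id. apply H3; lra.
      * apply is_derive_Reals, PP_deriv; auto.
    + apply (derivable_pt_lim_comp (fun u => u - 1) (PP rho)).
      * apply (derivable_pt_lim_minus id (fun _ => 1)). apply derivable_pt_lim_id. apply derivable_pt_lim_const.
      * apply is_derive_Reals, PP_deriv; auto.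
  - intros x Hx. rewrite Rmin_left in Hx by lra. rewrite Rmax_right in Hx by lra.
    unfold G.
    apply (continuity_pt_plus (fun u => u * rho u - PP rho u) (fun u => PP rho (u - 1))).
    + apply (continuity_pt_minus (fun u => u * rho u) (PP rho)).
      * apply (continuity_pt_mult id rho). apply derivable_continuous_pt, derivable_pt_id. apply H2; lra.
      * apply PP_cont; auto.
    + apply (continuity_pt_comp (fun u => u - 1) (PP rho)).
      * apply (continuity_pt_minus id (fun _ => 1)). apply derivable_continuous_pt, derivable_pt_id. apply continuity_pt_const. intros a b; auto.
      * apply PP_cont; auto.
  - unfold G in He. replace (1 - 1) with 0 in He by lra. rewrite PP_0, PP_1 in He; auto.
    rewrite (H1 1) in He by lra. lra.
Qed.

Lemma rho_mono_n rho : is_dickman rho -> forall n : nat,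
  (forall x, 0 <= x <= INR n + 1 -> 0 <= rho x) ->
  forall x y, 0 <= x <= y -> y <= INR n + 2 -> rho y <= rho x.
Proof.
  intros Hd n Hpos x y Hxy Hy. pose proof Hd as [H1 [H2 H3]].
  destruct (Rle_or_lt y 1) as [Hy1|Hy1].
  { rewrite !H1; lra. }
  set (a := Rmax 1 x).
  assert (Ha : rho a <= rho x).
  { unfold a. destruct (Rle_or_lt x 1).
    - rewrite Rmax_left by lra. rewrite !H1; lra.
    - rewrite Rmax_right by lra. lra. }
  assert (Hay : a <= y) by (unfold a; apply Rmax_lub; lra).
  assert (Ha1 : 1 <= a) by apply Rmax_l.
  destruct (MVT_gen rho a y (fun c => - rho (c - 1) / c)) as [c [Hc He]].
  - intros z Hz. rewrite Rmin_left in Hz by lra. rewrite Rmax_right in Hz by lra.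
    apply is_derive_Reals. apply H3. lra.
  - intros z Hz. rewrite Rmin_left in Hz by lra. rewrite Rmax_right in Hz by lra.
    apply H2. lra.
  - rewrite Rmin_left in Hc by lra. rewrite Rmax_right in Hc by lra.
    assert (0 <= rho (c - 1)) by (apply Hpos; lra).
    assert (- rho (c - 1) / c <= 0).
    { unfold Rdiv. rewrite <- Ropp_mult_distr_l.
      assert (0 <= rho (c - 1) * / c). apply Rmult_le_pos; auto. left; apply Rinv_0_lt_compat; lra. lra. }
    assert (rho y - rho a <= 0).
    { rewrite He. apply Rmult_le_0_r; lra. }
    lra.
Qed.

Lemma rho_pos_n rho : is_dickman rho -> forall n : nat,
  forall x, 0 <= x <= INR n + 1 -> 0 <= rho x.
Proof.
  intros Hd n. pose proof Hd as [H1 [H2 H3]]. induction n as [|n IH].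
  - intros x Hx. simpl in Hx. rewrite H1; lra.
  - intros x Hx. rewrite S_INR in Hx.
    destruct (Rle_or_lt x (INR n + 1)) as [Hle|Hlt]. { apply IH; lra. }
    pose (m := INR n + 1). assert (Hmd : m = INR n + 1) by reflexivity. clearbody m.
    assert (Hm1 : 1 <= m) by (pose proof (pos_INR n); lra).
    assert (Hx1 : 1 <= x) by lra. pose proof (ident rho Hd x Hx1) as Hid.
    destruct (PP_mvt rho Hd (x - 1) m ltac:(lra)) as [c1 [Hc1 E1]].
    destruct (PP_mvt rho Hd m x ltac:(lra)) as [c2 [Hc2 E2]].
    rewrite rt_pos in E1 by lra. rewrite rt_pos in E2 by lra.
    assert (P1 : 0 <= rho c1) by (apply IH; lra).
    assert (P2 : rho x <= rho c2).
    { apply (rho_mono_n rho Hd n IH); lra. }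
    assert (x * rho x >= rho x * (x - m)).
    { replace (x * rho x) with ((PP rho x - PP rho m) + (PP rho m - PP rho (x - 1))) by lra.
      rewrite E1, E2.
      assert (0 <= rho c1 * (m - (x - 1))) by (apply Rmult_le_pos; lra).
      assert (rho x * (x - m) <= rho c2 * (x - m)) by (apply Rmult_le_compat_r; lra).
      lra. }
    assert (m * rho x >= 0) by nra.
    nra.
Qed.

Lemma rho_nonneg rho : is_dickman rho -> forall x, 0 <= x -> 0 <= rho x.
Proof.
  intros Hd x Hx. destruct (nat_above x) as [n Hn].
  apply (rho_pos_n rho Hd n). lra.
Qed.

Lemma rho_mono rho : is_dickman rho -> forall x y, 0 <= x <= y -> rho y <= rho x.
Proof.
  intros Hd x y Hxy. destruct (nat_above y) as [n Hn].
  apply (rho_mono_n rho Hd n); auto. intros; apply rho_nonneg; auto; lra. lra.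
Qed.

Lemma rho_le1 rho : is_dickman rho -> forall x, 0 <= x -> rho x <= 1.
Proof.
  intros Hd x Hx. pose proof Hd as [H1 _]. rewrite <- (H1 0) by lra.
  apply rho_mono; auto; lra.
Qed.

Fixpoint sumR (f : nat -> R) (n : nat) : R :=
  match n with O => 0 | S k => sumR f k + f k end.

Lemma sumR_ext f g n : (forall i, (i < n)%nat -> f i = g i) -> sumR f n = sumR g n.
Proof. induction n; simpl; intros; auto. rewrite IHn, H; auto. Qed.

Lemma sumR_le f g n : (forall i, (i < n)%nat -> f i <= g i) -> sumR f n <= sumR g n.
Proof. induction n; simpl; intros; try lra. apply Rplus_le_compat; auto. Qed.

Lemma sumR_scal c f n : sumR (fun i => c * f i) n = c * sumR f n.
Proof. induction n; simpl. lra. rewrite IHn; lra. Qed.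

Lemma riemann rho : is_dickman rho -> forall a, 0 <= a -> forall N : nat, (1 <= N)%nat ->
  forall k, (k <= N)%nat ->
  PP rho (a + INR k / INR N) - PP rho a <= / INR N * sumR (fun i => rho (a + INR i / INR N)) k.
Proof.
  intros Hd a Ha N HN. assert (HNp : 0 < INR N) by (apply lt_0_INR; lia).
  induction k as [|k IH]; intros Hk.
  - simpl. replace (a + 0 / INR N) with a by (field; lra). lra.
  - simpl sumR. rewrite Rmult_plus_distr_l.
    assert (IH' := IH ltac:(lia)).
    assert (Hle : a + INR k / INR N <= a + INR (S k) / INR N).
    { rewrite S_INR. apply Rplus_le_compat_l. unfold Rdiv. apply Rmult_le_compat_r. left; apply Rinv_0_lt_compat; lra. lra. }
    destruct (PP_mvt rho Hd _ _ Hle) as [c [Hc E]].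
    assert (Hk0 : 0 <= INR k / INR N) by (apply Rdiv_le_0_compat; [apply pos_INR|lra]).
    rewrite rt_pos in E by lra.
    assert (rho c <= rho (a + INR k / INR N)) by (apply rho_mono; auto; lra).
    assert (Hdiff : a + INR (S k) / INR N - (a + INR k / INR N) = / INR N) by (rewrite S_INR; field; lra).
    rewrite Hdiff in E.
    assert (rho c * / INR N <= / INR N * rho (a + INR k / INR N)).
    { rewrite Rmult_comm. apply Rmult_le_compat_l; auto. left; apply Rinv_0_lt_compat; lra. }
    lra.
Qed.

Lemma rho_riemann rho : is_dickman rho -> forall t, 1 <= t -> forall N : nat, (1 <= N)%nat ->
  t * rho t <= / INR N * sumR (fun i => rho (t - 1 + INR i / INR N)) N.
Proof.
  intros Hd t Ht N HN. assert (HNp : 0 < INR N) by (apply lt_0_INR; lia).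
  rewrite (ident rho Hd t Ht).
  pose proof (riemann rho Hd (t - 1) ltac:(lra) N HN N (le_n _)) as H.
  replace (t - 1 + INR N / INR N) with t in H by (field; lra). exact H.
Qed.

Definition gg t := - t * ln t - t * ln (ln t) + 4 * t.
Definition dg t := - ln t - 1 - ln (ln t) - / ln t + 4.

Lemma gg_deriv t : 1 < t -> derivable_pt_lim gg t (dg t).
Proof.
  intro Ht. assert (Hl : 0 < ln t) by (rewrite <- ln_1; apply ln_increasing; lra).
  apply is_derive_Reals. unfold gg, dg. auto_derive.
  - repeat split; lra.
  - field. split; lra.
Qed.

Lemma ln_ge_of_exp a t : exp a <= t -> a <= ln t.
Proof. intro H. rewrite <- (ln_exp a). apply ln_le; auto. apply exp_pos. Qed.

Lemma exp4_gt1 : 1 < exp 4.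
Proof. pose proof (exp_ineq1_le 4). lra. Qed.

Lemma ln4_ge1 : 1 <= ln 4.
Proof. apply ln_ge_of_exp. pose proof exp_le_3. lra. Qed.

Lemma dg_le c : exp 4 <= c -> dg c <= -1.
Proof.
  intro H. pose proof (ln_ge_of_exp _ _ H) as H1.
  assert (ln 4 <= ln (ln c)) by (apply ln_le; lra).
  pose proof ln4_ge1. assert (0 < / ln c) by (apply Rinv_0_lt_compat; lra).
  unfold dg. lra.
Qed.

Lemma dg_mono c t : exp 4 <= c -> c <= t -> dg t <= dg c.
Proof.
  intros H Hct. pose proof (ln_ge_of_exp _ _ H) as H1. pose proof exp4_gt1.
  assert (H2 : ln c <= ln t) by (apply ln_le; lra).
  assert (ln (ln c) <= ln (ln t)) by (apply ln_le; lra).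
  unfold dg.
  assert (/ ln c - / ln t <= ln t - ln c).
  { replace (/ ln c - / ln t) with ((ln t - ln c) / (ln c * ln t)) by (field; lra).
    unfold Rdiv. rewrite <- (Rmult_1_r (ln t - ln c)) at 2. apply Rmult_le_compat_l; [lra|].
    rewrite <- Rinv_1. apply Rinv_le_contravar; nra. }
  lra.
Qed.

Lemma gg_mvt s t : exp 4 <= s -> s <= t -> exists c, s <= c <= t /\ gg t - gg s = dg c * (t - s).
Proof.
  intros Hs Hst. pose proof exp4_gt1.
  destruct (MVT_gen gg s t dg) as [c [Hc E]].
  - intros x Hx. rewrite Rmin_left in Hx by lra. rewrite Rmax_right in Hx by lra.
    apply is_derive_Reals, gg_deriv. lra.
  - intros x Hx. rewrite Rmin_left in Hx by lra. rewrite Rmax_right in Hx by lra.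
    apply derivable_continuous_pt. exists (dg x). apply gg_deriv. lra.
  - rewrite Rmin_left in Hc by lra. rewrite Rmax_right in Hc by lra. exists c; auto.
Qed.

Lemma gg_conc s t : exp 4 <= s -> s <= t -> gg s <= gg t - dg t * (t - s).
Proof.
  intros Hs Hst. destruct (gg_mvt s t Hs Hst) as [c [Hc E]].
  assert (dg t <= dg c) by (apply dg_mono; lra).
  assert (dg t * (t - s) <= dg c * (t - s)) by (apply Rmult_le_compat_r; lra).
  lra.
Qed.

Lemma gg_dec s t : exp 4 <= s -> s <= t -> gg t <= gg s.
Proof.
  intros Hs Hst. destruct (gg_mvt s t Hs Hst) as [c [Hc E]].
  assert (dg c <= -1) by (apply dg_le; lra).
  assert (dg c * (t - s) <= 0) by (apply Rmult_le_0_r; lra).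
  lra.
Qed.

Definition T0 := exp 4 + 1.
Definition ff t := exp (gg t - gg T0).

Lemma geom r N : (r - 1) * sumR (fun i => r ^ (N - i)) N = r ^ (S N) - r.
Proof.
  induction N.
  - simpl. ring.
  - change (sumR (fun i => r ^ (S N - i)) (S N)) with (sumR (fun i => r ^ (S N - i)) N + r ^ (S N - N)).
    rewrite (sumR_ext _ (fun i => r * r ^ (N - i))).
    + rewrite sumR_scal. replace (S N - N)%nat with 1%nat by lia.
      transitivity (r * ((r - 1) * sumR (fun i : nat => r ^ (N - i)) N) + (r - 1) * r ^ 1).
      ring. rewrite IHN. simpl. ring.
    + intros i Hi. replace (S N - i)%nat with (S (N - i)) by lia. simpl. ring.
Qed.

Lemma main_ineq t N : T0 <= t -> (1 <= N)%nat -> ln t + ln (ln t) + 1 <= INR N ->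
  / INR N * sumR (fun i => ff (t - 1 + INR i / INR N)) N < t * ff t.
Proof.
  intros Ht HN HNt. unfold T0 in Ht. pose proof exp4_gt1 as He4.
  assert (HNp : 0 < INR N) by (apply lt_0_INR; lia).
  assert (Hy : 4 <= ln t) by (apply ln_ge_of_exp; lra).
  assert (Hyy : 1 <= ln (ln t)) by (pose proof ln4_ge1; assert (ln 4 <= ln (ln t)) by (apply ln_le; lra); lra).
  assert (Hinv : 0 < / ln t <= / 4) by (split; [apply Rinv_0_lt_compat; lra | apply Rinv_le_contravar; lra]).
  set (D := - dg t).
  assert (HD : D = ln t + ln (ln t) + / ln t - 3) by (unfold D, dg; ring).
  assert (HD1 : 1 <= D) by (pose proof (dg_le t ltac:(lra)); unfold D; lra).
  assert (HDN : D <= INR N) by lra.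
  set (r := exp (D / INR N)).
  assert (Hr1 : D / INR N <= r - 1) by (pose proof (exp_ineq1_le (D / INR N)); unfold r; lra).
  assert (HDNp : 0 < D / INR N) by (apply Rdiv_lt_0_compat; lra).
  assert (Hterm : forall i, (i < N)%nat -> ff (t - 1 + INR i / INR N) <= ff t * r ^ (N - i)).
  { intros i Hi.
    assert (Hi0 : 0 <= INR i / INR N) by (apply Rdiv_le_0_compat; [apply pos_INR|lra]).
    assert (Hi1 : INR i / INR N <= 1).
    { apply (Rmult_le_reg_r (INR N)); auto. unfold Rdiv. rewrite Rmult_assoc, Rinv_l by lra.
      rewrite Rmult_1_r, Rmult_1_l. apply le_INR; lia. }
    pose proof (gg_conc (t - 1 + INR i / INR N) t ltac:(lra) ltac:(lra)) as Hc.
    unfold r. rewrite exp_pow_INR. unfold ff. rewrite <- exp_plus. apply exp_le.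
    rewrite minus_INR by lia. fold D in Hc.
    assert (E : (INR N - INR i) * (D / INR N) = D * (t - (t - 1 + INR i / INR N))) by (field; lra).
    rewrite E. replace (dg t) with (- D) in Hc by (unfold D; ring). lra. }
  assert (Hsum : sumR (fun i => ff (t - 1 + INR i / INR N)) N <= ff t * sumR (fun i => r ^ (N - i)) N).
  { rewrite <- sumR_scal. apply sumR_le. exact Hterm. }
  assert (Hgeo := geom r N).
  assert (Hrpos : 0 < r - 1) by lra.
  assert (HrN : r ^ S N <= exp (D + 1)).
  { unfold r. rewrite exp_pow_INR. apply exp_le. rewrite S_INR.
    replace ((INR N + 1) * (D / INR N)) with (D + D / INR N) by (field; lra).
    assert (D / INR N <= 1).
    { apply (Rmult_le_reg_r (INR N)); auto. unfold Rdiv. rewrite Rmult_assoc, Rinv_l by lra. lra. }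
    lra. }
  assert (Hr0 : 0 < r) by apply exp_pos.
  assert (HS : sumR (fun i => r ^ (N - i)) N < exp (D + 1) * INR N / D).
  { apply (Rmult_lt_reg_l (r - 1)); auto. rewrite Hgeo.
    apply Rlt_le_trans with (r ^ S N). lra.
    apply Rle_trans with (exp (D + 1)); auto.
    replace ((r - 1) * (exp (D + 1) * INR N / D)) with (exp (D + 1) * ((r - 1) / (D / INR N))) by (field; lra).
    rewrite <- (Rmult_1_r (exp (D + 1))) at 1. apply Rmult_le_compat_l. left; apply exp_pos.
    apply (Rmult_le_reg_r (D / INR N)); auto. unfold Rdiv at 2. rewrite Rmult_assoc, Rinv_l by lra. lra. }
  assert (HE : exp (D + 1) <= t * D).
  { replace (D + 1) with (ln t + ln (ln t) + (/ ln t - 2)) by lra.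
    rewrite !exp_plus, !exp_ln by lra.
    assert (exp (/ ln t - 2) <= / 2).
    { apply Rle_trans with (exp (- (7/4))). apply exp_le; lra.
      rewrite exp_Ropp. apply Rinv_le_contravar. lra. pose proof (exp_ineq1_le (7/4)). lra. }
    assert (0 < t * ln t) by nra.
    apply Rle_trans with (t * ln t * / 2).
    apply Rmult_le_compat_l; lra.
    assert (ln t / 2 <= D) by lra. nra. }
  assert (Hfft : 0 < ff t) by apply exp_pos.
  apply Rle_lt_trans with (/ INR N * (ff t * sumR (fun i => r ^ (N - i)) N)).
  { apply Rmult_le_compat_l; auto. left; apply Rinv_0_lt_compat; lra. }
  apply Rlt_le_trans with (/ INR N * (ff t * (exp (D + 1) * INR N / D))).
  { apply Rmult_lt_compat_l. apply Rinv_0_lt_compat; lra. apply Rmult_lt_compat_l; auto. }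
  replace (/ INR N * (ff t * (exp (D + 1) * INR N / D))) with (ff t * (exp (D + 1) / D)) by (field; lra).
  rewrite (Rmult_comm t). apply Rmult_le_compat_l; [lra|].
  apply (Rmult_le_reg_r D); [lra|]. unfold Rdiv. rewrite Rmult_assoc, Rinv_l by lra. lra.
Qed.

Lemma rho_ff_base rho : is_dickman rho -> forall s, T0 - 1 <= s <= T0 -> rho s <= ff s.
Proof.
  intros Hd s Hs. unfold T0 in *. pose proof exp4_gt1.
  apply Rle_trans with 1. apply rho_le1; auto; lra.
  unfold ff. rewrite <- exp_0. apply exp_le.
  pose proof (gg_dec s (exp 4 + 1) ltac:(lra) ltac:(lra)). unfold T0. lra.
Qed.

Lemma rho_le_ff rho : is_dickman rho -> forall t, T0 - 1 <= t -> rho t <= ff t.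
Proof.
  intros Hd t Ht. pose proof exp4_gt1 as He4.
  destruct (Rle_or_lt t T0) as [HtT|HtT]. { apply rho_ff_base; auto. }
  assert (HT0 : T0 = exp 4 + 1) by reflexivity.
  destruct (nat_above (ln t + ln (ln t) + 1)) as [N HN].
  assert (Hy : 4 <= ln t) by (apply ln_ge_of_exp; lra).
  assert (Hyy : 1 <= ln (ln t)) by (pose proof ln4_ge1; assert (ln 4 <= ln (ln t)) by (apply ln_le; lra); lra).
  assert (HN1 : (1 <= N)%nat).
  { destruct N. simpl in HN. lra. lia. }
  assert (HNp : 0 < INR N) by (apply lt_0_INR; lia).
  assert (Claim : forall n : nat, forall s, T0 - 1 <= s -> s <= T0 + INR n / INR N -> s <= t -> rho s <= ff s).
  { induction n as [|n IH]; intros s H1 H2 H3.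
    - simpl in H2. apply rho_ff_base; auto. split; auto. unfold Rdiv in H2. lra.
    - destruct (Rle_or_lt s (T0 + INR n / INR N)) as [Hs|Hs]. { apply IH; auto. }
      assert (Hn0 : 0 <= INR n / INR N) by (apply Rdiv_le_0_compat; [apply pos_INR|lra]).
      assert (HsT : T0 <= s) by lra.
      assert (Hs4 : 4 <= ln s) by (apply ln_ge_of_exp; lra).
      assert (HlnN : ln s + ln (ln s) + 1 <= INR N).
      { assert (ln s <= ln t) by (apply ln_le; lra).
        assert (ln (ln s) <= ln (ln t)) by (apply ln_le; lra). lra. }
      pose proof (main_ineq s N HsT HN1 HlnN) as Hm.
      pose proof (rho_riemann rho Hd s ltac:(lra) N HN1) as Hr.
      assert (Hle : sumR (fun i => rho (s - 1 + INR i / INR N)) N <= sumR (fun i => ff (s - 1 + INR i / INR N)) N).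
      { apply sumR_le. intros i Hi.
        assert (Hi0 : 0 <= INR i / INR N) by (apply Rdiv_le_0_compat; [apply pos_INR|lra]).
        assert (Hi1 : INR i / INR N <= 1 - / INR N).
        { apply (Rmult_le_reg_r (INR N)); auto. unfold Rdiv. rewrite Rmult_assoc, Rinv_l by lra.
          rewrite Rmult_minus_distr_r, Rinv_l by lra. rewrite Rmult_1_r, Rmult_1_l.
          assert (INR (S i) <= INR N) by (apply le_INR; lia). rewrite S_INR in *. lra. }
        assert (HSn : INR (S n) / INR N = INR n / INR N + / INR N) by (rewrite S_INR; field; lra).
        apply IH; lra. }
      assert (s * rho s < s * ff s).
      { apply Rle_lt_trans with (/ INR N * sumR (fun i => rho (s - 1 + INR i / INR N)) N); auto.
        apply Rle_lt_trans with (/ INR N * sumR (fun i => ff (s - 1 + INR i / INR N)) N); auto.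
        apply Rmult_le_compat_l; auto. left; apply Rinv_0_lt_compat; lra. }
      assert (0 < s) by lra. nra. }
  destruct (nat_above ((t - T0) * INR N)) as [n Hn].
  apply (Claim n); try lra.
  assert (t - T0 <= INR n / INR N).
  { apply (Rmult_le_reg_r (INR N)); auto. unfold Rdiv. rewrite Rmult_assoc, Rinv_l by lra. lra. }
  lra.
Qed.
End RhoPart.

Module NT.
From mathcomp Require Import ssreflect ssrfun ssrbool eqtype ssrnat seq div prime binomial bigop.
From mathcomp Require Import fintype zify.

Lemma lnle x y : 0 < x -> x <= y -> ln x <= ln y.
Proof. move=> Hx [H|->]; [left; apply ln_increasing => // | right]; auto. Qed.

Lemma Rdiv_nonneg a b : 0 <= a -> 0 < b -> 0 <= a / b.
Proof. move=> Ha Hb. unfold Rdiv. apply Rmult_le_pos => //. left; apply Rinv_0_lt_compat => //. Qed.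

Definition sumL (s : seq nat) (f : nat -> R) : R := foldr (fun x acc => f x + acc) 0 s.

Lemma sumL_cat s1 s2 f : sumL (s1 ++ s2) f = sumL s1 f + sumL s2 f.
Proof. elim: s1 => [|x s IH] /=; [lra | rewrite IH; lra]. Qed.

Lemma sumL_ext s f g : (forall x, x \in s -> f x = g x) -> sumL s f = sumL s g.
Proof.
  elim: s => [|x s IH] H //=. rewrite H ?mem_head // IH //.
  move=> y Hy; apply H; rewrite in_cons Hy orbT //.
Qed.

Lemma sumL_le s f g : (forall x, x \in s -> f x <= g x) -> sumL s f <= sumL s g.
Proof.
  elim: s => [|x s IH] H /=; first lra.
  apply Rplus_le_compat. apply H; rewrite mem_head //.
  apply IH => y Hy; apply H; rewrite in_cons Hy orbT //.
Qed.

Lemma sumL_zero s : sumL s (fun _ => 0) = 0.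
Proof. elim: s => //= x s ->; lra. Qed.

Lemma sumL_nonneg s f : (forall x, x \in s -> 0 <= f x) -> 0 <= sumL s f.
Proof. move=> H. have := sumL_le s (fun _ => 0) f H. have -> : sumL s (fun _ => 0) = 0.
  elim: s {H} => //= x s ->; lra. done. Qed.

Lemma sumL_scal s c f : sumL s (fun x => c * f x) = c * sumL s f.
Proof. elim: s => [|x s IH] /=; [lra | rewrite IH; lra]. Qed.

Lemma sumL_add s f g : sumL s (fun x => f x + g x) = sumL s f + sumL s g.
Proof. elim: s => [|x s IH] /=; [lra | rewrite IH; lra]. Qed.

Lemma sumL_sub s f g : sumL s (fun x => f x - g x) = sumL s f - sumL s g.
Proof. elim: s => [|x s IH] /=; [lra | rewrite IH; lra]. Qed.

Lemma sumL_filter (P : pred nat) s f : sumL (filter P s) f = sumL s (fun x => if P x then f x else 0).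
Proof. elim: s => [|x s IH] //=. case: (P x) => /=; rewrite IH; lra. Qed.

Lemma sumL_one s x c : uniq s -> x \in s -> sumL s (fun p => if p == x then c else 0) = c.
Proof.
  elim: s => [|y s IH] //= /andP [Hy Hu]. rewrite in_cons => /orP [/eqP Exy|Hx]. 
  - subst x. rewrite eqxx. rewrite (sumL_ext _ _ (fun _ => 0)).
    + have -> : sumL s (fun _ => 0) = 0 by elim: s {IH Hy Hu} => //= z s ->; lra. lra.
    + move=> z Hz. case: (z =P y) => [E|//]. subst z. by rewrite Hz in Hy.
  - rewrite IH //. case: (y =P x) => [E|_]; last lra. subst y. by rewrite Hx in Hy.
Qed.

Lemma INR_addn a b : INR (a + b)%N = INR a + INR b.
Proof. exact: plus_INR. Qed.
Lemma INR_muln a b : INR (a * b)%N = INR a * INR b.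
Proof. exact: mult_INR. Qed.

Definition primesTo (n : nat) := filter prime (iota 1 n).
Definition Sp (f : nat -> R) (n : nat) := sumL (primesTo n) f.

Lemma ln_nat_mul a b : (0 < a)%N -> (0 < b)%N -> ln (INR (a * b)) = ln (INR a) + ln (INR b).
Proof.
  move=> Ha Hb. rewrite INR_muln ln_mult //; apply lt_0_INR; apply/ltP => //.
Qed.

Lemma ident_ln : forall N m, (0 < m)%N -> (m <= N)%N ->
  ln (INR m) = Sp (fun p => INR (logn p m) * ln (INR p)) N.
Proof.
  move=> N m. elim: m {-2}m (leqnn m) => [|M IH] m Hm Hm0 HmN.
  - by move: Hm Hm0; rewrite leqn0 => /eqP ->.
  - case: (ltnP 1 m) => H1.
    + have Hp := pdiv_prime H1. set p0 := pdiv m.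
      have Hdv : p0 %| m := pdiv_dvd m.
      set m' := m %/ p0.
      have Hp1 := prime_gt1 Hp.
      have Hmm : m = (p0 * m')%N by rewrite /m' mulnC divnK.
      have Hm'0 : (0 < m')%N by rewrite /m' divn_gt0 ?pdiv_leq // ltnW.
      have Hm'lt : (m' < m)%N by rewrite /m' ltn_Pdiv.
      rewrite {1}Hmm ln_nat_mul //; last by rewrite ltnW.
      have HmM : (m' <= M)%N by rewrite -ltnS (leq_trans Hm'lt).
      have HmN' : (m' <= N)%N by apply: leq_trans HmN; apply ltnW.
      rewrite (IH m' HmM Hm'0 HmN').
      rewrite /Sp.
      transitivity (sumL (primesTo N) (fun p => (if p == p0 then ln (INR p0) else 0) + INR (logn p m') * ln (INR p))).
      * rewrite sumL_add sumL_one //.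
        - by rewrite /primesTo filter_uniq // iota_uniq.
        - rewrite /primesTo mem_filter Hp mem_iota /= add1n ltnS prime_gt0 //=.
          by apply: leq_trans HmN; apply pdiv_leq; apply: leq_trans Hm0.
      * apply sumL_ext => x. rewrite mem_filter => /andP [Hx _]. rewrite Hmm lognM //; last by rewrite ltnW.
        rewrite (logn_prime x Hp) INR_addn. case: eqP => [->|_] /=; lra.
    + have -> : m = 1%N by apply/eqP; rewrite eqn_leq H1 Hm0.
      rewrite /= ln_1. rewrite /Sp (sumL_ext _ _ (fun _ => 0)).
      by rewrite sumL_zero.
      by move=> x _; rewrite logn1 /=; lra.
Qed.

Definition LF n := sumL (iota 1 n) (fun m => ln (INR m)).

Lemma iota1S n : iota 1 n.+1 = iota 1 n ++ [:: n.+1].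
Proof. by rewrite -[n.+1]addn1 iotaD addnC. Qed.

Lemma LF_S n : LF n.+1 = LF n + ln (INR n.+1).
Proof. by rewrite /LF iota1S sumL_cat /=; lra. Qed.

Lemma LF_ident N n : (n <= N)%N -> LF n = Sp (fun p => INR (logn p n`!) * ln (INR p)) N.
Proof.
  elim: n => [|n IH] Hn.
  - rewrite /LF /= /Sp (sumL_ext _ _ (fun _ => 0)) ?sumL_zero //.
    move=> x _. rewrite logn1 /=. lra.
  - rewrite LF_S IH; last by apply ltnW.
    rewrite (ident_ln N n.+1) // /Sp -sumL_add. apply sumL_ext => x _.
    rewrite factS lognM ?fact_gt0 // INR_addn. lra.
Qed.

Lemma ln_1px x : 0 <= x -> ln (1 + x) <= x.
Proof.
  move=> Hx. rewrite -{2}(ln_exp x). apply lnle. lra. apply exp_ineq1_le.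
Qed.

Lemma ln_succ_diff n : (1 <= n)%N -> ln (INR n.+1) - ln (INR n) <= / INR n.
Proof.
  move=> Hn. have Hp : 0 < INR n by apply lt_0_INR; apply/ltP.
  rewrite S_INR.
  have Hi : 0 < / INR n by apply Rinv_0_lt_compat.
  replace (ln (INR n + 1) - ln (INR n)) with (ln ((INR n + 1) * / INR n)).
  2: rewrite ln_mult ?ln_Rinv //; lra.
  replace ((INR n + 1) * / INR n) with (1 + / INR n) by (field; lra).
  apply ln_1px. left; apply Rinv_0_lt_compat; lra.
Qed.

Lemma LF_upper n : LF n <= INR n * ln (INR n).
Proof.
  elim: n => [|n IH]. rewrite /LF /=. lra.
  rewrite LF_S.
  case: n IH => [|n] IH.
  - rewrite /= ln_1 in IH *. lra.
  - have Hl : ln (INR n.+1) <= ln (INR n.+2).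
    { apply lnle. apply lt_0_INR; lia. apply le_INR; lia. }
    have Hp : 0 <= INR n.+1 by apply pos_INR.
    have E : INR n.+2 * ln (INR n.+2) = INR n.+1 * ln (INR n.+2) + ln (INR n.+2) by rewrite (S_INR n.+1); ring.
    rewrite E. nra.
Qed.

Lemma LF_lower n : INR n * ln (INR n) - INR n <= LF n.
Proof.
  elim: n => [|n IH]. rewrite /LF /=. lra.
  rewrite LF_S.
  case: n IH => [|n] IH.
  - rewrite /= ln_1 in IH *. lra.
  - have Hd := ln_succ_diff n.+1 isT.
    have Hp : 0 < INR n.+1 by apply lt_0_INR; lia.
    have : INR n.+1 * (ln (INR n.+2) - ln (INR n.+1)) <= 1.
    { apply Rle_trans with (INR n.+1 * / INR n.+1). apply Rmult_le_compat_l; lra.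
      rewrite Rinv_r; lra. }
    have E : INR n.+2 * ln (INR n.+2) - INR n.+2 = INR n.+1 * ln (INR n.+2) + ln (INR n.+2) - INR n.+1 - 1 by rewrite (S_INR n.+1); ring.
    rewrite E. nra.
Qed.

Lemma INR_expn p k : INR (p ^ k)%N = INR p ^ k.
Proof. elim: k => [|k IH] //. by rewrite expnS INR_muln IH. Qed.

Lemma INR_divn_le a b : (0 < b)%N -> INR (a %/ b) <= INR a / INR b.
Proof.
  move=> Hb. have Hbp : 0 < INR b by apply lt_0_INR; apply/ltP.
  have H := leq_trunc_div a b. have : INR (a %/ b * b) <= INR a by apply le_INR; apply/leP.
  rewrite INR_muln => H2. apply (Rmult_le_reg_r (INR b)) => //.
  unfold Rdiv. rewrite Rmult_assoc Rinv_l; lra.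
Qed.

Lemma INR_divn_ge a b : (0 < b)%N -> INR a / INR b - 1 <= INR (a %/ b).
Proof.
  move=> Hb. have Hbp : 0 < INR b by apply lt_0_INR; apply/ltP.
  have H := ltn_ceil a Hb. have : INR a <= INR ((a %/ b).+1 * b) by apply le_INR; apply/leP; apply ltnW.
  rewrite INR_muln S_INR => H2.
  have : INR a / INR b <= INR (a %/ b) + 1.
  { apply (Rmult_le_reg_r (INR b)) => //. unfold Rdiv. rewrite Rmult_assoc Rinv_l; lra. }
  lra.
Qed.

Lemma v_upper p n : prime p -> INR (logn p n`!) <= INR n / (INR p - 1).
Proof.
  move=> Hp. rewrite logn_fact //.
  have Hp1 : 1 < INR p by apply lt_1_INR; apply/ltP; apply prime_gt1.
  suff H : forall K, INR (\sum_(1 <= k < K.+1) n %/ p ^ k) <= INR n / (INR p - 1) - INR n / ((INR p - 1) * INR p ^ K).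
  { have := H n. have : 0 <= INR n / ((INR p - 1) * INR p ^ n).
    apply Rdiv_nonneg. apply pos_INR. apply Rmult_lt_0_compat. lra. apply pow_lt; lra. lra. }
  elim => [|K IH].
  - rewrite big_geq //= Rmult_1_r. lra.
  - rewrite big_nat_recr //= INR_addn.
    have Hpk : (0 < p ^ K.+1)%N by rewrite expn_gt0 prime_gt0.
    have := INR_divn_le n _ Hpk. rewrite INR_expn => H1.
    have Hq : 0 < INR p ^ K by apply pow_lt; lra.
    replace (INR n / (INR p - 1) - INR n / ((INR p - 1) * (INR p * INR p ^ K))) with
      (INR n / (INR p - 1) - INR n / ((INR p - 1) * INR p ^ K) + INR n / (INR p ^ K.+1)).
    + lra.
    + simpl. field. repeat split; lra.
Qed.

Lemma v_lower p n : prime p -> INR n / INR p - 1 <= INR (logn p n`!).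
Proof.
  move=> Hp. rewrite logn_fact //.
  have Hp1 : 1 < INR p by apply lt_1_INR; apply/ltP; apply prime_gt1.
  case: n => [|n].
  - rewrite big_geq //=. unfold Rdiv. rewrite Rmult_0_l. lra.
  - rewrite big_ltn // INR_addn expn1.
    have := INR_divn_ge n.+1 p (prime_gt0 Hp). have := pos_INR (\sum_(2 <= i < n.+2) n.+1 %/ p ^ i). lra.
Qed.

Lemma binom_two n i j : (i <= n)%N -> (j <= n)%N -> i <> j -> ('C(n, i) + 'C(n, j) <= 2 ^ n)%N.
Proof.
  move=> Hi Hj Hij.
  have E : (2 ^ n = \sum_(k < n.+1) 'C(n, k))%N.
  { have := expnDn 1 1 n. rewrite addnn -mul2n muln1 => ->.
    apply eq_bigr => k _. by rewrite !exp1n !muln1. }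
  rewrite E. rewrite (bigD1 (Ordinal (n:=n.+1) (m:=i) Hi)) //=.
  rewrite (bigD1 (Ordinal (n:=n.+1) (m:=j) Hj)) //=.
  - rewrite addnA. apply leq_addr.
  - apply/eqP => H. apply Hij. by case: H.
Qed.

Lemma binom_mid m : ('C(m.*2.+1, m) <= 4 ^ m)%N.
Proof.
  have H := binom_two m.*2.+1 m m.+1.
  have E : 'C(m.*2.+1, m.+1) = 'C(m.*2.+1, m).
  { rewrite -(bin_sub (n:=m.*2.+1) (m:=m)); last lia. f_equal. lia. }
  have : ('C(m.*2.+1, m) + 'C(m.*2.+1, m.+1) <= 2 ^ m.*2.+1)%N by apply H; lia.
  have E2 : (2 ^ m.*2.+1 = 2 * 4 ^ m)%N by rewrite expnS -mul2n expnM.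
  rewrite E E2. lia.
Qed.

Definition theta n := Sp (fun p => ln (INR p)) n.

Lemma primesTo_add a b : primesTo (a + b) = primesTo a ++ filter prime (iota a.+1 b).
Proof. by rewrite /primesTo iotaD filter_cat add1n. Qed.

Lemma mem_primesTo p n : (p \in primesTo n) = prime p && (p <= n)%N.
Proof.
  rewrite /primesTo mem_filter mem_iota. case Hp: (prime p) => //=.
  by rewrite add1n ltnS (prime_gt0 Hp).
Qed.

Lemma ln_prime_nonneg p : prime p -> 0 <= ln (INR p).
Proof.
  move=> Hp. rewrite -ln_1. apply lnle. lra. apply (le_INR 1). apply/leP. by apply prime_gt0.
Qed.

Lemma lnC_bound m : ln (INR 'C(m.*2.+1, m)) <= INR m * ln 4.
Proof.
  have Hc : (0 < 'C(m.*2.+1, m))%N by rewrite bin_gt0; lia.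
  rewrite -ln_pow; last lra.
  apply lnle. apply lt_0_INR; apply/ltP => //.
  replace 4 with (INR 4) by (simpl; lra). rewrite -INR_expn. apply le_INR; apply/leP; apply binom_mid.
Qed.

Lemma logn_fact_small p m : prime p -> (m < p)%N -> logn p m`! = 0%N.
Proof.
  move=> Hp Hm. rewrite logn_fact // big_nat_cond big1 // => k /andP [/andP [Hk _] _].
  apply divn_small. apply: leq_trans Hm _. case: k Hk => [//|k] _.
  rewrite expnS. apply leq_pmulr. by rewrite expn_gt0 prime_gt0.
Qed.

Lemma logn_C_ge1 m p : prime p -> (m.+1 < p)%N -> (p <= m.*2.+1)%N -> (1 <= logn p 'C(m.*2.+1, m))%N.
Proof.
  move=> Hp H1 H2.
  have Ef := bin_fact (n:=m.*2.+1) (m:=m) ltac:(lia).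
  have Hnm : (m.*2.+1 - m = m.+1)%N by rewrite -addnn; lia.
  rewrite Hnm in Ef.
  have L := congr1 (logn p) Ef.
  rewrite lognM ?bin_gt0 ?muln_gt0 ?fact_gt0 // in L; last lia.
  rewrite lognM ?fact_gt0 // in L.
  rewrite (logn_fact_small p m) ?(logn_fact_small p m.+1) // in L; try lia.
  rewrite addn0 addn0 in L. rewrite L.
  rewrite logn_fact // big_ltn // expn1. rewrite -(addn0 1%N). apply leq_add => //.
  by rewrite divn_gt0 ?prime_gt0.
Qed.

Lemma Fnonneg s (F : nat -> nat) : 0 <= sumL (filter prime s) (fun p => INR (F p) * ln (INR p)).
Proof.
  apply sumL_nonneg => x. rewrite mem_filter => /andP [Hx _].
  apply Rmult_le_pos. apply pos_INR. by apply ln_prime_nonneg.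
Qed.

Lemma theta_step m : theta (m.*2.+1) <= theta m.+1 + INR m * ln 4.
Proof.
  have Em : (m.*2.+1 = m.+1 + m)%N by lia.
  rewrite /theta /Sp Em primesTo_add sumL_cat.
  set C := 'C(m.*2.+1, m).
  have HC : (0 < C)%N by rewrite bin_gt0; lia.
  have := lnC_bound m. fold C.
  rewrite (ident_ln (m.+1 + m + C) C) //; last lia.
  rewrite /Sp primesTo_add primesTo_add !sumL_cat.
  have H1 := Fnonneg (iota 1 m.+1) (fun p => logn p C).
  have H2 := Fnonneg (iota (m.+1 + m).+1 C) (fun p => logn p C).
  rewrite /primesTo in H1 *.
  have H3 : sumL (filter prime (iota m.+2 m)) (fun p => ln (INR p)) <=
            sumL (filter prime (iota m.+2 m)) (fun p => INR (logn p C) * ln (INR p)).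
  { apply sumL_le => x. rewrite mem_filter mem_iota => /andP [Hx /andP [Hx1 Hx2]].
    have Hl := logn_C_ge1 m x Hx ltac:(lia) ltac:(lia). fold C in Hl.
    have Hln := ln_prime_nonneg x Hx.
    have : 1 <= INR (logn x C) by apply (le_INR 1); apply/leP.
    nra. }
  lra.
Qed.

Lemma theta_S n : theta n.+1 = theta n + (if prime n.+1 then ln (INR n.+1) else 0).
Proof.
  rewrite /theta /Sp -[n.+1]addn1 primesTo_add sumL_cat /=. rewrite addn1. case: (prime n.+1) => /=; lra.
Qed.

Lemma ln4_pos : 0 < ln 4.
Proof. rewrite -ln_1. apply ln_increasing; lra. Qed.

Lemma theta_bound n : theta n <= INR n * ln 4.
Proof.
  have L4 := ln4_pos.
  elim: n {-2}n (leqnn n) => [|M IH] n Hn.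
  - move: Hn; rewrite leqn0 => /eqP ->. rewrite /theta /Sp /= . lra.
  - case: n Hn => [|n] Hn. rewrite /theta /Sp /=. lra.
    case: n Hn => [|n] Hn. rewrite /theta /Sp /primesTo /=. lra.
    case: n Hn => [|n] Hn.
    + rewrite theta_S. have -> : prime 2 = true by []. have -> : theta 1 = 0 by rewrite /theta /Sp /primesTo /=.
      replace (INR 2) with 2 by (simpl; lra).
      have : ln 2 <= ln 4 by apply lnle; lra. lra.
    + case Ho: (odd n).
      *
        rewrite theta_S.
        have -> : prime n.+3 = false.
        { apply/negP => Hp. case: (even_prime Hp) => [|/=]; first lia. by rewrite Ho. }
        have := IH n.+2 ltac:(lia). rewrite !S_INR. lra.
      *
        have Hk : n = (n./2).*2 by rewrite -[n in LHS](odd_double_half n) Ho.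
        set k := n./2 in Hk.
        have E : n.+3 = (k.+1).*2.+1 by rewrite Hk; lia.
        rewrite E. have := theta_step k.+1.
        have := IH k.+2 ltac:(lia).
        have : INR n.+3 = INR k.+2 + INR k.+1.
        { rewrite E -!plus_INR. f_equal. lia. }
        rewrite E. move=> Heq. rewrite Heq. lra.
Qed.

Definition L0 n := Sp (fun p => ln (INR p) / INR p) n.
Definition L1 n := Sp (fun p => ln (INR p) / (INR p - 1)) n.

Lemma prime_INR_ge2 p : prime p -> 2 <= INR p.
Proof. move=> Hp. apply (le_INR 2). apply/leP. by apply prime_gt1. Qed.

Lemma L0_upper n : (1 <= n)%N -> L0 n <= ln (INR n) + ln 4.
Proof.
  move=> Hn. have Hnp : 0 < INR n by apply lt_0_INR; apply/ltP.
  have E := LF_ident n n (leqnn n).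
  have H1 : LF n >= INR n * L0 n - theta n.
  { rewrite E /L0 /theta /Sp -sumL_scal -sumL_sub. apply Rle_ge, sumL_le => x.
    rewrite mem_primesTo => /andP [Hx _].
    have := v_lower x n Hx. have := ln_prime_nonneg x Hx. have := prime_INR_ge2 x Hx.
    move=> H2 H3 H4.
    replace (INR n * (ln (INR x) / INR x) - ln (INR x)) with ((INR n / INR x - 1) * ln (INR x)) by (field; lra).
    apply Rmult_le_compat_r; lra. }
  have := LF_upper n. have := theta_bound n.
  move=> H2 H3.
  have : INR n * L0 n <= INR n * (ln (INR n) + ln 4) by lra.
  move=> H4. apply (Rmult_le_reg_l (INR n)); lra.
Qed.

Lemma L1_lower n : (1 <= n)%N -> ln (INR n) - 1 <= L1 n.
Proof.
  move=> Hn. have Hnp : 0 < INR n by apply lt_0_INR; apply/ltP.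
  have E := LF_ident n n (leqnn n).
  have H1 : LF n <= INR n * L1 n.
  { rewrite E /L1 /Sp -sumL_scal. apply sumL_le => x.
    rewrite mem_primesTo => /andP [Hx _].
    have := v_upper x n Hx. have := ln_prime_nonneg x Hx. have := prime_INR_ge2 x Hx.
    move=> H2 H3 H4.
    replace (INR n * (ln (INR x) / (INR x - 1))) with ((INR n / (INR x - 1)) * ln (INR x)) by (field; lra).
    apply Rmult_le_compat_r; lra. }
  have := LF_lower n. move=> H2.
  apply (Rmult_le_reg_l (INR n)); lra.
Qed.

Definition hh (d : nat) := ln (INR d) / (INR d * (INR d - 1)).

Lemma T_bound n : (1 <= n)%N -> sumL (iota 1 n) hh <= 2 - (ln (INR n) + 2) / INR n.
Proof.
  elim: n => [//|n IH] _.
  case: n IH => [|n] IH.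
  - rewrite /= /hh /= ln_1. lra.
  - rewrite iota1S sumL_cat.
    have -> : sumL [:: n.+2] hh = hh n.+2 by rewrite /sumL /= Rplus_0_r.
    have := IH isT. move=> H.
    have Hp : 0 < INR n.+1 by apply lt_0_INR; lia.
    have Hd := ln_succ_diff n.+1 isT.
    rewrite [hh n.+2]/hh. rewrite (S_INR n.+1) in Hd |- *.
    set a := INR n.+1 in Hp Hd H |- *.
    set L := ln a in Hd H |- *. set L' := ln (a + 1) in Hd |- *.
    replace (a + 1 - 1) with a by ring.
    have Hinv : L' / ((a + 1) * a) + (L' + 2) / (a + 1) <= (L + 2) / a.
    { have : (a + 1) * (L' - L) <= 2.
      { have : (a + 1) * (L' - L) <= (a + 1) * / a by apply Rmult_le_compat_l; lra.
        have : (a + 1) * / a <= 2.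
        { apply (Rmult_le_reg_r a) => //. rewrite Rmult_assoc Rinv_l; try lra.
          have : 1 <= a by apply (le_INR 1); lia. lra. }
        lra. }
      move=> H2.
      have E : (L + 2) / a - (L' / ((a + 1) * a) + (L' + 2) / (a + 1)) = (2 - (a + 1) * (L' - L)) / ((a + 1) * a) by field; lra.
      have : 0 <= (2 - (a + 1) * (L' - L)) / ((a + 1) * a) by apply Rdiv_nonneg; nra.
      lra. }
    lra.
Qed.

Lemma L1_L0 n : L1 n - L0 n <= 2.
Proof.
  case: n => [|n]. rewrite /L1 /L0 /Sp /primesTo /=. lra.
  apply Rle_trans with (sumL (iota 1 n.+1) hh).
  - rewrite /L1 /L0 /Sp -sumL_sub /primesTo sumL_filter. apply sumL_le => x.
    rewrite mem_iota => /andP [Hx1 _].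
    case Hx: (prime x).
    + have := prime_INR_ge2 x Hx => H2. rewrite /hh. right. field. lra.
    + rewrite /hh. case: x Hx1 Hx => [//|[|x]] _ _.
      * rewrite ln_1 /Rdiv Rmult_0_l. lra.
      * apply Rdiv_nonneg.
        -- rewrite -ln_1. apply lnle. lra. apply (le_INR 1); lia.
        -- have : 2 <= INR x.+2 by apply (le_INR 2); lia. nra.
  - have := T_bound n.+1 isT. have : 0 <= (ln (INR n.+1) + 2) / INR n.+1.
    { apply Rdiv_nonneg. have : 0 <= ln (INR n.+1). rewrite -ln_1. apply lnle. lra. apply (le_INR 1); lia. lra.
      apply lt_0_INR; lia. }
    lra.
Qed.

Lemma ln4_le2 : ln 4 <= 2.
Proof.
  have : ln 4 <= ln (exp 2).
  { apply lnle. lra. replace 2 with (1 + 1) by ring. rewrite exp_plus.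
    have := exp_ineq1_le 1. nra. }
  by rewrite ln_exp.
Qed.

Lemma mertens a b : (1 <= a)%N -> (a <= b)%N -> (2 <= b)%N ->
  (ln (INR b) - ln (INR a) - 5) / (2 * ln (INR b)) <=
  sumL (filter prime (iota a.+1 (b - a))) (fun p => / INR p).
Proof.
  move=> Ha Hab Hb.
  have Hbp : 0 < ln (INR b).
  { rewrite -ln_1. apply ln_increasing. lra. apply (lt_INR 1); lia. }
  have E : primesTo b = primesTo a ++ filter prime (iota a.+1 (b - a)).
  { rewrite -primesTo_add. f_equal. lia. }
  set mid := filter prime (iota a.+1 (b - a)).
  have HM : ln (INR b) - ln (INR a) - 5 <= sumL mid (fun p => ln (INR p) / (INR p - 1)).
  { have H1 := L1_lower b ltac:(lia). have H2 := L1_L0 a. have H3 := L0_upper a Ha.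
    have H4 := ln4_le2.
    rewrite /L1 /Sp E sumL_cat -/mid in H1. rewrite /L1 /Sp in H2. lra. }
  apply Rle_trans with (sumL mid (fun p => ln (INR p) / (INR p - 1) * / (2 * ln (INR b)))).
  - rewrite (sumL_ext _ _ (fun p => / (2 * ln (INR b)) * (ln (INR p) / (INR p - 1)))).
    + rewrite sumL_scal. apply Rle_trans with (/ (2 * ln (INR b)) * (ln (INR b) - ln (INR a) - 5)).
      right; rewrite /Rdiv; ring.
      apply Rmult_le_compat_l. left; apply Rinv_0_lt_compat; lra. exact HM.
    + move=> x _; ring.
  - apply sumL_le => x. rewrite mem_filter mem_iota => /andP [Hx /andP [Hx1 Hx2]].
    have H2 := prime_INR_ge2 x Hx. have H3 := ln_prime_nonneg x Hx.
    have H4 : ln (INR x) <= ln (INR b) by apply lnle; [lra | apply le_INR; lia].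
    replace (ln (INR x) / (INR x - 1) * / (2 * ln (INR b))) with ((ln (INR x) / ln (INR b)) * / (2 * (INR x - 1))) by (field; lra).
    apply Rle_trans with (1 * / (2 * (INR x - 1))).
    + apply Rmult_le_compat_r. left; apply Rinv_0_lt_compat; lra.
      apply (Rmult_le_reg_r (ln (INR b))) => //. rewrite /Rdiv Rmult_assoc Rinv_l; lra.
    + rewrite Rmult_1_l. apply Rinv_le_contravar; lra.
Qed.

Definition fl (x : R) : nat := Z.to_nat (Int_part x).

Lemma fl_spec x : 0 <= x -> INR (fl x) <= x < INR (fl x) + 1.
Proof.
  move=> Hx. have [H1 H2] := base_Int_part x.
  have Hz : (0 <= Int_part x)%Z.
  { have : (-1 < Int_part x)%Z by apply lt_IZR; lra. lia. }
  rewrite /fl INR_IZR_INZ Z2Nat.id //. lra.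
Qed.

Lemma fl_lt1 x p : 0 <= x -> (fl x < p)%N -> x < INR p.
Proof.
  move=> Hx H. have [H1 H2] := fl_spec x Hx.
  have : INR (fl x) + 1 <= INR p by rewrite -S_INR; apply le_INR; apply/leP.
  lra.
Qed.

Lemma fl_lt2 x p : 0 <= x -> x < INR p -> (fl x < p)%N.
Proof.
  move=> Hx H. have [H1 H2] := fl_spec x Hx. apply/ltP. apply INR_lt. lra.
Qed.

Lemma fl_le1 x p : 0 <= x -> (p <= fl x)%N -> INR p <= x.
Proof.
  move=> Hx H. have [H1 H2] := fl_spec x Hx.
  have : INR p <= INR (fl x) by apply le_INR; apply/leP. lra.
Qed.

Lemma fl_le2 x p : 0 <= x -> INR p <= x -> (p <= fl x)%N.
Proof.
  move=> Hx H. have [H1 H2] := fl_spec x Hx. apply/leP.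
  have : (p < (fl x).+1)%coq_nat. apply INR_lt. rewrite S_INR. lra. lia.
Qed.

Definition PR (X Y : R) : seq nat := filter prime (iota (fl X).+1 (fl Y - fl X)).

Lemma PR_mem X Y p : 0 <= X -> X <= Y -> p \in PR X Y -> prime p /\ X < INR p /\ INR p <= Y.
Proof.
  move=> HX HXY. rewrite /PR mem_filter mem_iota => /andP [Hp /andP [H1 H2]].
  split => //. split. apply fl_lt1 => //. apply fl_le1. lra.
  have : (fl X <= fl Y)%N by apply fl_le2 => //; have := fl_spec X HX; lra.
  lia.
Qed.

Lemma PR_uniq X Y : uniq (PR X Y).
Proof. by rewrite /PR filter_uniq // iota_uniq. Qed.

Lemma mertensR X Y : 1 <= X -> X <= Y -> 2 <= Y -> 6 <= ln Y - ln X ->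
  (ln Y - ln X - 6) / (2 * ln Y) <= sumL (PR X Y) (fun p => / INR p).
Proof.
  move=> H1 H2 H3 H6.
  have [a1 a2] := fl_spec X ltac:(lra). have [b1 b2] := fl_spec Y ltac:(lra).
  have Ha : (1 <= fl X)%N by apply fl_le2; simpl; lra.
  have Hab : (fl X <= fl Y)%N by apply fl_le2; lra.
  have Hb : (2 <= fl Y)%N by apply fl_le2; simpl; lra.
  have := mertens (fl X) (fl Y) Ha Hab Hb. rewrite -/(PR X Y) => HM.
  apply: Rle_trans HM.
  have Hap : 0 < INR (fl X) by apply (lt_INR 0); lia.
  have HlnY : 0 < ln Y by rewrite -ln_1; apply ln_increasing; lra.
  have Hla : ln (INR (fl X)) <= ln X by apply lnle.
  have Hlb : ln (INR (fl Y)) <= ln Y by apply lnle; [apply (lt_INR 0); lia | lra].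
  have Hlb2 : ln Y - ln 2 <= ln (INR (fl Y)).
  { have : Y * / 2 <= INR (fl Y) by lra.
    move=> H. have : ln (Y * / 2) <= ln (INR (fl Y)) by apply lnle; lra.
    rewrite ln_mult ?ln_Rinv; lra. }
  have Hl2 : ln 2 <= 1.
  { have : ln 2 <= ln (exp 1). apply lnle; [lra | have := exp_ineq1_le 1; lra]. by rewrite ln_exp. }
  have HlX : 0 <= ln X by rewrite -ln_1; apply lnle; lra.
  have Hlbp : 0 < ln (INR (fl Y)) by lra.
  apply Rle_trans with ((ln Y - ln X - 6) / (2 * ln (INR (fl Y)))).
  - rewrite /Rdiv. apply Rmult_le_compat_l; first lra.
    apply Rinv_le_contravar; lra.
  - rewrite /Rdiv. apply Rmult_le_compat_r. left; apply Rinv_0_lt_compat; lra. lra.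
Qed.

Lemma uniq_allpairs_nat (s : seq nat) (t : nat -> seq nat) (f : nat -> nat -> nat) :
  uniq s -> (forall x, x \in s -> uniq (t x)) ->
  (forall x y x' y', x \in s -> y \in t x -> x' \in s -> y' \in t x' -> f x y = f x' y' -> x = x' /\ y = y') ->
  uniq [seq f x y | x <- s, y <- t x].
Proof.
  elim: s => [//|x s IH] /= /andP [Hx Hs] Ht Hinj.
  rewrite cat_uniq. apply/and3P; split.
  - rewrite map_inj_in_uniq. apply Ht; rewrite mem_head //.
    move=> y y' Hy Hy' E. have := Hinj x y x y' (mem_head _ _) Hy (mem_head _ _) Hy' E. by case.
  - apply/hasP => [[z Hz1 Hz2]]. move/allpairsPdep: Hz1 => [x' [y' [Hx' Hy' Ez]]].
    move/mapP: Hz2 => [y Hy Ez']. rewrite Ez' in Ez.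
    have := Hinj x y x' y' (mem_head _ _) Hy _ _ Ez.
    rewrite in_cons Hx' orbT => /(_ isT Hy') [Exx _]. subst x'. by rewrite Hx' in Hx.
  - apply IH => //. move=> z Hz; apply Ht; rewrite in_cons Hz orbT //.
    move=> a b a' b' Ha Hb Ha' Hb'. apply Hinj => //; rewrite in_cons ?Ha ?Ha' orbT //.
Qed.

Lemma sumL_allpairs (s : seq nat) (t : nat -> seq nat) (f : nat -> nat -> nat) g :
  sumL [seq f x y | x <- s, y <- t x] g = sumL s (fun x => sumL (t x) (fun y => g (f x y))).
Proof.
  elim: s => [//|x s IH] /=. rewrite sumL_cat IH. f_equal.
  elim: (t x) => //= y l ->. done.
Qed.

Lemma size_allpairs_nat (s : seq nat) (t : nat -> seq nat) (f : nat -> nat -> nat) :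
  INR (size [seq f x y | x <- s, y <- t x]) = sumL s (fun x => INR (size (t x))).
Proof.
  elim: s => [//|x s IH] /=. rewrite size_cat size_map INR_addn IH //.
Qed.

Fixpoint prods (Is : seq (R * R)) : seq nat :=
  match Is with
  | [::] => [:: 1%N]
  | (X, Y) :: Is' => [seq (p * k)%N | k <- prods Is', p <- PR X Y]
  end.

Fixpoint allbelow (Is : seq (R * R)) (b : R) : Prop :=
  match Is with [::] => True | (X, Y) :: Is' => Y <= b /\ allbelow Is' b end.
Fixpoint allabove (Is : seq (R * R)) (a : R) : Prop :=
  match Is with [::] => True | (X, Y) :: Is' => a <= X /\ allabove Is' a end.
Fixpoint chain (Is : seq (R * R)) : Prop :=
  match Is with [::] => True | (X, Y) :: Is' => 1 <= X /\ X <= Y /\ allbelow Is' X /\ chain Is' end.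
Fixpoint inIs (Is : seq (R * R)) (r : R) : Prop :=
  match Is with [::] => False | (X, Y) :: Is' => (X < r <= Y) \/ inIs Is' r end.
Fixpoint prodX (Is : seq (R * R)) : R :=
  match Is with [::] => 1 | (X, Y) :: Is' => X * prodX Is' end.
Fixpoint prodY (Is : seq (R * R)) : R :=
  match Is with [::] => 1 | (X, Y) :: Is' => Y * prodY Is' end.
Fixpoint prodS (Is : seq (R * R)) : R :=
  match Is with [::] => 1 | (X, Y) :: Is' => sumL (PR X Y) (fun p => / INR p) * prodS Is' end.

Lemma inIs_below Is b r : inIs Is r -> allbelow Is b -> r <= b.
Proof. elim: Is => [//|[X Y] Is IH] /= [H|H] [H1 H2]; [lra | auto]. Qed.

Lemma inIs_above Is a r : inIs Is r -> allabove Is a -> a < r.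
Proof. elim: Is => [//|[X Y] Is IH] /= [H|H] [H1 H2]; [lra | auto]. Qed.

Lemma prodX_ge1 Is : chain Is -> 1 <= prodX Is.
Proof. elim: Is => [|[X Y] Is IH] /=. lra. move=> [H1 [_ [_ H]]]. have := IH H. nra. Qed.

Lemma prods_props Is : chain Is ->
  uniq (prods Is) /\
  (forall k, k \in prods Is ->
     (0 < k)%N /\ prodX Is <= INR k <= prodY Is /\
     (forall r, prime r -> (r %| k)%N -> inIs Is (INR r))) /\
  sumL (prods Is) (fun k => / INR k) = prodS Is.
Proof.
  elim: Is => [|[X Y] Is IH] /=.
  - split => //. split. move=> k. rewrite inE => /eqP ->. split => //. split. simpl; lra.
      move=> r Hr Hd. have := prime_gt1 Hr. have := dvdn_leq (ltn0Sn 0) Hd. lia.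
    simpl. lra.
  - move=> [HX [HXY [Hb Hc]]]. have [Hu [Hk Hs]] := IH Hc.
    have HPR := PR_mem X Y. 
    split; [|split].
    + apply uniq_allpairs_nat => //. move=> *; apply PR_uniq.
      move=> k p k' p' Hk1 Hp1 Hk2 Hp2 E.
      have [Pp [Pp1 Pp2]] := HPR p ltac:(lra) HXY Hp1.
      have [Pp' [Pp1' Pp2']] := HPR p' ltac:(lra) HXY Hp2.
      have [Hk0 [_ Hkr]] := Hk k Hk1. have [Hk0' [_ Hkr']] := Hk k' Hk2.
      have Hpp : p = p'.
      { have : (p %| p' * k')%N by rewrite -E dvdn_mulr.
        rewrite Euclid_dvdM // => /orP [|H].
        - by rewrite dvdn_prime2 // => /eqP.
        - have := inIs_below _ _ _ (Hkr' p Pp H) Hb. lra. }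
      subst p'. split => //. apply/eqP. rewrite -(eqn_pmul2l (prime_gt0 Pp)). by apply/eqP.
    + move=> n /allpairsPdep [k [p [Hk1 Hp1 ->]]].
      have [Pp [Pp1 Pp2]] := HPR p ltac:(lra) HXY Hp1.
      have [Hk0 [[Hk2 Hk3] Hkr]] := Hk k Hk1.
      split; [|split].
      * by rewrite muln_gt0 prime_gt0.
      * rewrite INR_muln. have : 0 <= prodX Is.
        { have := prodX_ge1 Is Hc. lra. }
        move=> H0. split; nra.
      * move=> r Hr. rewrite Euclid_dvdM // => /orP [H|H].
        -- left. move: H; rewrite dvdn_prime2 // => /eqP ->. lra.
        -- right. by apply Hkr.
    + rewrite sumL_allpairs. rewrite (sumL_ext _ _ (fun k => sumL (PR X Y) (fun p => / INR p) * / INR k)).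
      * by rewrite sumL_scal Hs.
      * move=> k Hk1. rewrite [RHS]Rmult_comm -sumL_scal. apply sumL_ext => p Hp1.
        have [Pp _] := HPR p ltac:(lra) HXY Hp1. have [Hk0 _] := Hk k Hk1.
        rewrite INR_muln Rinv_mult. ring.
Qed.

Lemma filter_eqL (f : nat -> bool) (l : list nat) : List.filter f l = seq.filter f l.
Proof. elim: l => //= x l ->. Qed.

Lemma seq_iota m n : List.seq m n = iota m n.
Proof. elim: n m => [|n IH] m //=. Qed.

Lemma length_size (l : list nat) : List.length l = size l.
Proof. by elim: l => //= x l ->. Qed.

Lemma dec_prop_true (P : Prop) : dec_prop P = true <-> P.
Proof. rewrite /dec_prop. case: excluded_middle_informative => //. Qed.

Lemma zprime_prime p : Znumtheory.prime (Z.of_nat p) -> prime p.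
Proof.
  move=> Hp. have Hp1 : (1 < p)%N.
  { have := prime_ge_2 _ Hp. lia. }
  apply/primeP. split => // d Hd.
  move/dvdnP: Hd => [c Hc].
  have Hz : (Z.of_nat d | Z.of_nat p)%Z.
  { exists (Z.of_nat c). rewrite Hc. lia. }
  have := prime_divisors _ Hp _ Hz. rewrite /= => H.
  apply/orP. case: H => [H|[H|[H|H]]]; first [lia | (left; apply/eqP; lia) | (right; apply/eqP; lia)].
Qed.

Lemma divide_dvdn p k : Nat.divide p k -> (p %| k)%N.
Proof. move=> [c Hc]. apply/dvdnP. exists c. rewrite Hc. done. Qed.

Lemma count_lower q d (A : seq nat) :
  uniq A ->
  (forall k, k \in A -> (0 < k)%N /\
     (forall r, prime r -> (r %| k)%N -> Rpower (INR q) (d / 10) < INR r <= Rpower (INR q) d) /\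
     INR q <= Rpower (INR q) (d / 10) * INR k) ->
  sumL A (fun k => INR ((q - 1) %/ k)) <= INR (count_good q d).
Proof.
  move=> HA Hk. set y := Rpower (INR q) (d / 10) in Hk *.
  set N := [seq (m * k)%N | k <- A, m <- iota 1 ((q - 1) %/ k)].
  have Hsz : INR (size N) = sumL A (fun k => INR ((q - 1) %/ k)).
  { rewrite /N size_allpairs_nat. apply sumL_ext => k _. by rewrite size_iota. }
  rewrite -Hsz /count_good filter_eqL seq_iota length_size.
  have Hmy : forall k m, k \in A -> m \in iota 1 ((q - 1) %/ k) -> INR m < y.
  { move=> k m Hk1 Hm. rewrite mem_iota in Hm. have [Hk0 [_ Hqk]] := Hk k Hk1.
    have H1 : (m * k <= q - 1)%N.
    { apply: leq_trans (leq_trunc_div (q - 1) k). rewrite leq_mul2r. apply/orP; right. lia. }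
    have Hkp : 0 < INR k by apply lt_0_INR; apply/ltP.
    have : INR (m * k) < INR q by apply lt_INR; apply/ltP; lia.
    rewrite INR_muln => H2. nra. }
  apply le_INR. apply/leP. apply uniq_leq_size.
  - apply uniq_allpairs_nat => //. move=> *; apply iota_uniq.
    move=> k m k' m' Hk1 Hm1 Hk2 Hm2 E.
    have Hm0 : (0 < m')%N by move: Hm2; rewrite mem_iota; lia.
    have Hm00 : (0 < m)%N by move: Hm1; rewrite mem_iota; lia.
    have Hcop : forall a b a' b', a \in A -> b \in iota 1 ((q - 1) %/ a) -> a' \in A -> b' \in iota 1 ((q - 1) %/ a') -> coprime a b'.
    { move=> a b a' b' Ha Hb Ha' Hb'. have Hb0 : (0 < b')%N by move: Hb'; rewrite mem_iota; lia.
      rewrite /coprime. apply/negPn/negP => Hg.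
      have Hg1 : (1 < gcdn a b')%N.
      { have : (0 < gcdn a b')%N by rewrite gcdn_gt0 Hb0 orbT. lia. }
      have Hr := pdiv_prime Hg1. set r := pdiv (gcdn a b') in Hr.
      have Hra : (r %| a)%N by apply: dvdn_trans (pdiv_dvd _) (dvdn_gcdl _ _).
      have Hrb : (r %| b')%N by apply: dvdn_trans (pdiv_dvd _) (dvdn_gcdr _ _).
      have [_ [Hpr _]] := Hk a Ha. have [H1 _] := Hpr r Hr Hra.
      have := Hmy a' b' Ha' Hb'. have : INR r <= INR b' by apply le_INR; apply/leP; apply dvdn_leq.
      lra. }
    have Hkk : k = k'.
    { apply/eqP. rewrite eqn_dvd. apply/andP; split.
      - rewrite -(Gauss_dvdr _ (Hcop _ _ _ _ Hk1 Hm1 Hk2 Hm2)). by rewrite -E dvdn_mull.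
      - rewrite -(Gauss_dvdr _ (Hcop _ _ _ _ Hk2 Hm2 Hk1 Hm1)). by rewrite E dvdn_mull. }
    subst k'. split => //. apply/eqP. have [Hk0 _] := Hk k Hk1.
    by rewrite -(eqn_pmul2r Hk0) E.
  - move=> n /allpairsPdep [k [m [Hk1 Hm1 ->]]].
    have [Hk0 [Hpr Hqk]] := Hk k Hk1.
    have Hm := Hmy k m Hk1 Hm1.
    move: (Hm1). rewrite mem_iota => /andP [Hm0 Hm2].
    have H1 : (m * k <= q - 1)%N.
    { apply: leq_trans (leq_trunc_div (q - 1) k). rewrite leq_mul2r. apply/orP; right. lia. }
    rewrite mem_filter. apply/andP; split.
    + apply/dec_prop_true. exists m, k. split; [apply/leP; lia|]. split; [apply/leP; lia|].
      split; first done. split; first (rewrite /y in Hm; lra).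
      move=> p Hp Hd. apply Hpr. by apply zprime_prime. by apply divide_dvdn.
    + rewrite mem_iota. apply/andP; split. by rewrite muln_gt0 Hm0. lia.
Qed.

Definition FI (L b w : R) (i : nat) : R * R :=
  (exp (L * (b - INR i * w)), exp (L * (b - (INR i - 1) * w))).

Lemma exp_ge1 x : 0 <= x -> 1 <= exp x.
Proof. move=> H. have := exp_ineq1_le x. lra. Qed.

Lemma exp_mono x y : x <= y -> exp x <= exp y.
Proof. move=> [H|->]; [left; apply exp_increasing | right] => //. Qed.

Lemma allbelow_F L b w s n c : 0 <= L -> 0 <= w -> exp (L * (b - (INR s - 1) * w)) <= c ->
  allbelow (map (FI L b w) (iota s n)) c.
Proof.
  elim: n s => [//|n IH] s HL Hw Hc /=. split.
  - exact Hc.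
  - apply IH => //. apply: Rle_trans Hc. apply exp_mono. apply Rmult_le_compat_l => //. rewrite S_INR. nra.
Qed.

Lemma allabove_F L b w s n c : 0 <= L -> 0 <= w -> c <= exp (L * (b - (INR (s + n) - 1) * w)) ->
  allabove (map (FI L b w) (iota s n)) c.
Proof.
  elim: n s => [//|n IH] s HL Hw Hc /=. split.
  - apply: Rle_trans Hc _. apply exp_mono. apply Rmult_le_compat_l => //.
    rewrite INR_addn S_INR. have := pos_INR n. nra.
  - apply IH => //. by rewrite addSnnS.
Qed.

Lemma chain_F L b w s n : 0 <= L -> 0 <= w -> 0 <= b - INR (s + n) * w ->
  chain (map (FI L b w) (iota s n)).
Proof.
  elim: n s => [//|n IH] s HL Hw Hb /=. split; [|split; [|split]].
  - apply exp_ge1. apply Rmult_le_pos => //. rewrite INR_addn S_INR in Hb. have := pos_INR n. nra.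
  - apply exp_mono. apply Rmult_le_compat_l => //. nra.
  - apply allbelow_F => //. rewrite S_INR. apply exp_mono. apply Rmult_le_compat_l => //. nra.
  - apply IH => //. by rewrite addSnnS.
Qed.

Lemma prodX_F L b w s n :
  prodX (map (FI L b w) (iota s n)) = exp (L * (INR n * b - w * (INR n * INR s + INR n * (INR n - 1) / 2))).
Proof.
  elim: n s => [|n IH] s. rewrite /= -[LHS]exp_0. f_equal. field.
  rewrite [INR n.+1]S_INR /= IH -exp_plus. apply f_equal. rewrite S_INR. field.
Qed.

Lemma prodY_F L b w s n :
  prodY (map (FI L b w) (iota s n)) = exp (L * (INR n * b - w * (INR n * INR s + INR n * (INR n - 1) / 2) + w * INR n)).
Proof.
  elim: n s => [|n IH] s. rewrite /= -[LHS]exp_0. f_equal. field.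
  rewrite [INR n.+1]S_INR /= IH -exp_plus. apply f_equal. rewrite S_INR. field.
Qed.

Lemma prodS_F L b w s n m : 0 <= m ->
  (forall i, (s <= i)%N -> (i < s + n)%N -> m <= sumL (PR (FI L b w i).1 (FI L b w i).2) (fun p => / INR p)) ->
  m ^ n <= prodS (map (FI L b w) (iota s n)).
Proof.
  elim: n s => [|n IH] s Hm H /=. lra.
  apply Rmult_le_compat => //.
  - apply pow_le => //.
  - apply (H s) => //; lia.
  - apply IH => // i Hi1 Hi2. apply H; lia.
Qed.

Lemma ln_le_sub1 x : 0 < x -> ln x <= x - 1.
Proof.
  move=> Hx. have := exp_ineq1_le (x - 1). move=> H.
  have : ln x <= ln (exp (x - 1)) by apply lnle; lra. by rewrite ln_exp.
Qed.

Lemma div_le a b c : 0 < c -> a <= b * c -> a / c <= b.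
Proof.
  move=> Hc H. apply (Rmult_le_reg_r c) => //.
  replace (a / c * c) with a by (field; lra). lra.
Qed.

Lemma le_div a b c : 0 < c -> b * c <= a -> b <= a / c.
Proof.
  move=> Hc H. apply (Rmult_le_reg_r c) => //.
  replace (a / c * c) with a by (field; lra). lra.
Qed.

Definition ell u := ln (u + 3).
Definition jj u : nat := (fl (u + (u + 2) / (20 * ell u))).+1.
Definition ww u := / (20 * INR (jj u) * ell u).
Definition beta u := (u - / 10) / INR (jj u) + ww u * (INR (jj u) + 1) / 2.

Lemma ell_ge1 u : 2 <= u -> 1 <= ell u.
Proof.
  move=> Hu. rewrite /ell. have : ln (exp 1) <= ln (u + 3).
  { apply lnle. apply exp_pos. have := exp_le_3. lra. }
  by rewrite ln_exp.
Qed.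

Lemma ell_le u : 2 <= u -> ell u <= u + 2.
Proof. move=> Hu. rewrite /ell. have := ln_le_sub1 (u + 3). lra. Qed.

Lemma jj_bounds u : 2 <= u ->
  u + (u + 2) / (20 * ell u) < INR (jj u) <= u + (u + 2) / (20 * ell u) + 1.
Proof.
  move=> Hu. have Hl := ell_ge1 u Hu.
  have H0 : 0 <= (u + 2) / (20 * ell u) by apply Rdiv_nonneg; lra.
  have := fl_spec (u + (u + 2) / (20 * ell u)) ltac:(lra).
  rewrite /jj S_INR. lra.
Qed.

Lemma param_facts u : 2 <= u ->
  let j := INR (jj u) in let w := ww u in let b := beta u in
  0 < w /\ j * w <= / 20 /\ b <= 1 /\ / 10 <= b - j * w /\ 0 <= b - (j + 1) * w /\
  j <= 2 * u /\ 1 <= j.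
Proof.
  move=> Hu j w b. have Hl := ell_ge1 u Hu. have Hle := ell_le u Hu.
  have [Hj1 Hj2] := jj_bounds u Hu. fold j in Hj1, Hj2.
  have Hr0 : 0 <= (u + 2) / (20 * ell u) by apply Rdiv_nonneg; lra.
  have Hr1 : (u + 2) / (20 * ell u) <= (u + 2) / 20.
  { rewrite /Rdiv. apply Rmult_le_compat_l; first lra. apply Rinv_le_contravar; lra. }
  have Hjpos : 2 < j by lra.
  have Hw : w = / (20 * j * ell u) by [].
  have Hwp : 0 < w by rewrite Hw; apply Rinv_0_lt_compat; nra.
  have Hjw : j * w = / (20 * ell u) by rewrite Hw; field; lra.
  have Hjw2 : j * w <= / 20 by rewrite Hjw; apply Rinv_le_contravar; lra.
  have Hb : b = (u - / 10) / j + w * (j + 1) / 2 by [].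
  have Hj2u : j <= 2 * u by lra.
  have Hb1 : b <= 1.
  { rewrite Hb. have : w * (j + 1) / 2 = (j + 1) / (40 * j * ell u) by rewrite Hw; field; lra.
    move=> ->.
    have : (j + 1) / (40 * ell u) <= (u + 2) / (20 * ell u).
    { rewrite /Rdiv. rewrite Rinv_mult (Rinv_mult 20).
      have Hil : 0 < / ell u by apply Rinv_0_lt_compat; lra.
      have : (j + 1) * (/ 40 * / ell u) = ((j + 1) / 2) * (/ 20 * / ell u) by field; lra.
      move=> ->. apply Rmult_le_compat_r. have : 0 < / 20 * / ell u by nra. lra. lra. }
    move=> H.
    have E : (u - / 10) / j + (j + 1) / (40 * j * ell u) = (u - / 10 + (j + 1) / (40 * ell u)) / j by field; lra.
    rewrite E. apply div_le; lra. }
  have Hb2 : / 10 <= b - j * w.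
  { have : 3 / 10 <= (u - / 10) / j.
    { apply le_div; lra. }
    have : 0 <= w * (j + 1) / 2 by apply Rdiv_nonneg; nra.
    rewrite Hb. lra. }
  have Hw20 : w <= / 20.
  { have : w <= j * w by nra. lra. }
  repeat split; try lra.
Qed.

Lemma count_bound q d : (2 <= q)%N -> 0 < d < / 2 -> 2880 * (/ d) ^ 3 <= ln (INR q) ->
  / 4 * (ww (/ d) / 4) ^ (jj (/ d)) * INR q <= INR (count_good q d).
Proof.
  move=> Hq2 [Hd0 Hd1] Hlam.
  set u := / d in Hlam *.
  have Hu : 2 < u by rewrite /u -(Rinv_inv 2); apply Rinv_lt_contravar; lra.
  have HqR : 2 <= INR q by apply (le_INR 2); apply/leP.
  set lam := ln (INR q) in Hlam.
  have Hexpl : exp lam = INR q by rewrite /lam exp_ln; lra.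
  set L := d * lam.
  have HLu : L * u = lam by rewrite /L /u; field; lra.
  have [Hw [Hjw [Hb1 [Hb2 [Hb3 [Hj2u Hj1]]]]]] := param_facts u ltac:(lra).
  set jn := jj u in Hw Hjw Hb1 Hb2 Hb3 Hj2u Hj1 *.
  set j := INR jn in Hjw Hb2 Hb3 Hj2u Hj1.
  set w := ww u in Hw Hjw Hb1 Hb2 Hb3 *.
  set b := beta u in Hb1 Hb2 Hb3.
  have Hl1 := ell_ge1 u ltac:(lra). have Hl2 := ell_le u ltac:(lra).
  have Hwdef : w * (20 * j * ell u) = 1 by rewrite /w /ww -/jn -/j; field; lra.
  have HL2 : 2880 * u ^ 2 <= L.
  { have : L = lam / u by rewrite /L /u; field; lra. move=> ->. apply le_div; first lra.
    simpl in Hlam |- *. lra. }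
  have Hdenom : 20 * j * ell u <= 80 * u ^ 2 by simpl; nra.
  have HLw : 12 <= L * w.
  { have : 36 * (20 * j * ell u) <= L by lra.
    move=> H. have : 36 * (20 * j * ell u) * w <= L * w by apply Rmult_le_compat_r; lra.
    nra. }
  have HL0 : 60 <= L by simpl in HL2; nra.
  set Is := map (FI L b w) (iota 1 jn).
  have Hchain : chain Is.
  { apply chain_F; try lra. rewrite INR_addn -/j. simpl. lra. }
  have [HU [HK HS]] := prods_props Is Hchain.
  have Hy : Rpower (INR q) (d / 10) = exp (L / 10) by rewrite /Rpower -/lam /L; f_equal; field.
  have Hz : Rpower (INR q) d = exp L by rewrite /Rpower -/lam /L.
  have Habove : allabove Is (exp (L / 10)).
  { apply allabove_F; try lra. apply exp_mono. rewrite INR_addn -/j /=.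
    have : L * (/ 10) <= L * (b - (1 + j - 1) * w) by apply Rmult_le_compat_l; lra. lra. }
  have Hbelow : allbelow Is (exp L).
  { apply allbelow_F; try lra. apply exp_mono. simpl.
    have : L * (b - (1 - 1) * w) <= L * 1 by apply Rmult_le_compat_l; lra. lra. }
  have HPX : prodX Is = exp (L * (u - / 10)).
  { rewrite /Is prodX_F -/j. f_equal. f_equal. rewrite /b /beta -/jn -/j -/w. simpl. field. lra. }
  have HPY : prodY Is = exp (L * (u - / 10) + L * w * j).
  { rewrite /Is prodY_F -/j. f_equal. rewrite /b /beta -/jn -/j -/w. simpl. field. lra. }
  have HPYq : prodY Is <= INR q / 4.
  { rewrite HPY -Hexpl.
    have : L * (u - / 10) + L * w * j <= lam - L / 20.
    { have : L * w * j <= L * / 20 by rewrite Rmult_assoc; apply Rmult_le_compat_l; lra. lra. }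
    move=> H. apply Rle_trans with (exp (lam - L / 20)). by apply exp_mono.
    rewrite /Rminus exp_plus exp_Ropp. have := exp_ineq1_le (L / 20). move=> H2.
    have Hel : 0 < exp lam by apply exp_pos.
    rewrite /Rdiv. apply Rmult_le_compat_l; first lra. apply Rinv_le_contravar; lra. }
  have Hcl := count_lower q d (prods Is) HU.
  have Hmain : sumL (prods Is) (fun k => INR ((q - 1) %/ k)) <= INR (count_good q d).
  { apply Hcl => k Hk1. have [Hk0 [[HkX HkY] Hkr]] := HK k Hk1.
    split => //. split.
    - move=> r Hr Hrk. have Hin := Hkr r Hr Hrk. rewrite Hy Hz. split.
      + exact: inIs_above Hin Habove.
      + exact: inIs_below Hin Hbelow.
    - rewrite Hy. apply Rle_trans with (exp (L / 10) * prodX Is).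
      + rewrite HPX -exp_plus -Hexpl -HLu. apply exp_mono. lra.
      + apply Rmult_le_compat_l => //. left; apply exp_pos. }
  have Hlow : (INR q - 1) / 2 * prodS Is <= sumL (prods Is) (fun k => INR ((q - 1) %/ k)).
  { rewrite -HS -sumL_scal. apply sumL_le => k Hk1. have [Hk0 [[HkX HkY] _]] := HK k Hk1.
    have Hkp : 0 < INR k by apply lt_0_INR; apply/ltP.
    have := INR_divn_ge (q - 1) k Hk0. rewrite minus_INR; last by apply/leP; lia.
    simpl INR at 2. move=> H.
    have : 2 * INR k <= INR q - 1 by lra.
    move=> H2.
    have : (INR q - 1) / 2 * / INR k <= (INR q - 1) / INR k - 1.
    { have E : (INR q - 1) / INR k - 1 - (INR q - 1) / 2 * / INR k = (INR q - 1 - 2 * INR k) / (2 * INR k) by field; lra.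
      have : 0 <= (INR q - 1 - 2 * INR k) / (2 * INR k) by apply Rdiv_nonneg; lra. lra. }
    lra. }
  have HPS : (w / 4) ^ jn <= prodS Is.
  { apply prodS_F; first lra. move=> i Hi1 Hi2. rewrite /FI /=.
    have Hi : 1 <= INR i <= j by split; [apply (le_INR 1) | apply le_INR]; apply/leP; lia.
    set X := exp (L * (b - INR i * w)). set Y := exp (L * (b - (INR i - 1) * w)).
    have HlnX : ln X = L * (b - INR i * w) by rewrite /X ln_exp.
    have HlnY : ln Y = L * (b - (INR i - 1) * w) by rewrite /Y ln_exp.
    have Hdiff : ln Y - ln X = L * w by rewrite HlnX HlnY; ring.
    have HlnYL : ln Y <= L.
    { rewrite HlnY. have : L * (b - (INR i - 1) * w) <= L * 1 by apply Rmult_le_compat_l; nra. lra. }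
    have HlnYp : L * w <= ln Y.
    { rewrite HlnY. have : L * w <= L * (b - (INR i - 1) * w) by apply Rmult_le_compat_l; nra. lra. }
    have HX1 : 1 <= X by apply exp_ge1; apply Rmult_le_pos; nra.
    have HXY : X <= Y by apply exp_mono; apply Rmult_le_compat_l; nra.
    have HY2 : 2 <= Y.
    { have : 2 <= exp (ln Y). apply: Rle_trans (exp_mono _ _ (Rle_trans _ _ _ HLw HlnYp)).
      have := exp_ineq1_le 12. lra. rewrite exp_ln //. apply exp_pos. }
    have HM := mertensR X Y HX1 HXY HY2 ltac:(lra).
    apply: Rle_trans HM. rewrite Hdiff.
    apply le_div; first lra.
    have : w / 4 * (2 * ln Y) <= w / 4 * (2 * L) by apply Rmult_le_compat_l; lra.
    lra. }
  have HqS : (INR q) / 4 * (w / 4) ^ jn <= (INR q - 1) / 2 * prodS Is.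
  { have Hp : 0 <= (w / 4) ^ jn by apply pow_le; lra.
    apply Rmult_le_compat; lra. }
  lra.
Qed.

Lemma count_bound' q d : (2 <= q)%coq_nat -> 0 < d < / 2 -> 2880 * (/ d) ^ 3 <= ln (INR q) ->
  / 4 * (ww (/ d) / 4) ^ (jj (/ d)) * INR q <= INR (count_good q d).
Proof. move=> H. apply count_bound. by apply/leP. Qed.
End NT.

Module Fin.
Import RhoPart NT.

Lemma ln_1px' x : 0 <= x -> ln (1 + x) <= x.
Proof.
  intro Hx. rewrite <- (ln_exp x) at 2. apply lnle. lra. apply exp_ineq1_le.
Qed.

Lemma ln_add_le a r : 0 < a -> 0 <= r -> ln (a + r) <= ln a + r / a.
Proof.
  intros Ha Hr. replace (a + r) with (a * (1 + r / a)) by (field; lra).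
  rewrite ln_mult; try lra. pose proof (ln_1px' (r / a) (Rdiv_nonneg r a Hr Ha)). lra.
  assert (0 <= r / a) by (apply Rdiv_nonneg; lra). lra.
Qed.

Lemma caseB u : T0 < u ->
  INR (jj u) * ln (80 * INR (jj u) * ell u) <= u * ln u + u * ln (ln u) + 196 * u.
Proof.
  intro Hu. unfold T0 in Hu. pose proof exp4_gt1 as He4.
  assert (Hu2 : 2 <= u) by lra.
  assert (Hlu : 4 <= ln u) by (apply ln_ge_of_exp; lra).
  assert (Hllu : 1 <= ln (ln u)) by (pose proof ln4_ge1; assert (ln 4 <= ln (ln u)) by (apply lnle; lra); lra).
  assert (Hlu_u : ln u <= u) by (pose proof (ln_le_sub1 u ltac:(lra)); lra).
  assert (Hllu_lu : ln (ln u) <= ln u) by (pose proof (ln_le_sub1 (ln u) ltac:(lra)); lra).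
  pose proof (ell_ge1 u Hu2) as Hl1.
  destruct (jj_bounds u Hu2) as [Hj1 Hj2].
  set (j := INR (jj u)) in *. set (l := ell u) in *.
  assert (Hlge : ln u <= l) by (unfold l, ell; apply lnle; lra).
  assert (Hlle : l <= ln u + 1).
  { unfold l, ell. pose proof (ln_add_le u 3 ltac:(lra) ltac:(lra)).
    assert (3 / u <= 1) by (apply div_le; lra). lra. }
  set (r := (u + 2) / (20 * l) + 1) in *.
  assert (Hr0 : 1 <= r) by (unfold r; assert (0 <= (u + 2) / (20 * l)) by (apply Rdiv_nonneg; lra); lra).
  assert (Hrl : r * ln u <= 2 * u).
  { unfold r. assert ((u + 2) / (20 * l) * ln u <= (u + 2) / 20).
    { replace ((u + 2) / (20 * l) * ln u) with ((u + 2) / 20 * (ln u / l)) by (field; lra).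
      rewrite <- (Rmult_1_r ((u + 2) / 20)) at 2. apply Rmult_le_compat_l. apply Rdiv_nonneg; lra.
      apply div_le; lra. }
    lra. }
  assert (Hru : r <= u).
  { unfold r. assert ((u + 2) / (20 * l) <= (u + 2) / 20).
    { unfold Rdiv. apply Rmult_le_compat_l; [lra|]. apply Rinv_le_contravar; lra. }
    lra. }
  assert (Hjr : j <= u + r) by (unfold r; lra).
  assert (Hj1' : 1 <= j) by (assert (0 <= (u + 2) / (20 * l)) by (apply Rdiv_nonneg; lra); lra).
  assert (H80 : ln 80 <= 79) by (pose proof (ln_le_sub1 80 ltac:(lra)); lra).
  assert (Hlnj : ln j <= ln u + r / u).
  { apply Rle_trans with (ln (u + r)). apply lnle; lra. apply ln_add_le; lra. }
  assert (Hlnl : ln l <= ln (ln u) + 1).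
  { apply Rle_trans with (ln (ln u + 1)). apply lnle; lra.
    pose proof (ln_add_le (ln u) 1 ltac:(lra) ltac:(lra)). assert (1 / ln u <= 1) by (apply div_le; lra). lra. }
  assert (HZ : ln (80 * j * l) = ln 80 + ln j + ln l).
  { rewrite !ln_mult; try lra; nra. }
  assert (HZ0 : 0 <= ln (80 * j * l)).
  { rewrite <- ln_1. apply lnle. lra. nra. }
  assert (Hru2 : r / u <= 1) by (apply div_le; lra).
  set (Z := ln (80 * j * l)) in *.
  assert (HZb : Z <= ln u + ln (ln u) + 81) by lra.
  assert (H1 : j * Z <= (u + r) * Z) by (apply Rmult_le_compat_r; lra).
  assert (H2 : (u + r) * Z <= (u + r) * (ln u + ln (ln u) + 80 + r / u)).
  { apply Rmult_le_compat_l; lra. }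
  assert (H3 : r * ln (ln u) <= 2 * u) by nra.
  assert (H4 : r * (r / u) <= r) by nra.
  assert (H5 : u * (r / u) = r) by (field; lra).
  nra.
Qed.

Lemma pow_le_base a b n : 0 <= a -> a <= b -> a ^ n <= b ^ n.
Proof. intros. induction n; simpl. lra. apply Rmult_le_compat; auto. apply pow_le; auto. Qed.

Lemma pow_le_exp b n m : 0 <= b <= 1 -> (n <= m)%nat -> b ^ m <= b ^ n.
Proof.
  intros Hb Hnm. induction Hnm. lra.
  simpl. apply Rle_trans with (b ^ m). rewrite <- (Rmult_1_l (b ^ m)) at 2.
  apply Rmult_le_compat_r. apply pow_le; lra. lra. auto.
Qed.

Lemma big_exp t : 737280 <= t -> 2880 * t ^ 3 <= exp t.
Proof.
  intro Ht. replace (exp t) with (exp (t / 4) ^ 4).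
  2:{ rewrite exp_pow_INR. f_equal. simpl. field. }
  pose proof (exp_ineq1_le (t / 4)).
  apply Rle_trans with ((t / 4) ^ 4).
  - replace ((t / 4) ^ 4) with (t ^ 3 * (t / 256)) by (simpl; field).
    rewrite (Rmult_comm 2880). apply Rmult_le_compat_l. apply pow_le; lra. lra.
  - apply pow_le_base; lra.
Qed.

Lemma final_ineq (rho : R -> R) : is_dickman rho -> exists C : R, 0 < C /\
  forall u, 2 < u -> C * rho u * exp (- u * 200) <= / 4 * (ww u / 4) ^ (jj u).
Proof.
  intros Hd.
  pose proof exp4_gt1 as He4.
  assert (HT0 : 0 < T0) by (unfold T0; lra).
  set (b0 := / (80 * (2 * T0) * (T0 + 2))).
  assert (Hb0 : 0 < b0 <= 1).
  { unfold b0. split. apply Rinv_0_lt_compat. nra. rewrite <- Rinv_1. apply Rinv_le_contravar. lra.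
    unfold T0. nra. }
  destruct (nat_above (2 * T0)) as [N0 HN0].
  set (CA := / 4 * b0 ^ N0). set (CB := exp (gg T0) / 4).
  assert (HCA : 0 < CA) by (unfold CA; apply Rmult_lt_0_compat; [lra | apply pow_lt; lra]).
  assert (HCB : 0 < CB) by (unfold CB; pose proof (exp_pos (gg T0)); lra).
  exists (Rmin CA CB). split. apply Rmin_glb_lt; auto.
  intros u Hu.
  destruct (param_facts u ltac:(lra)) as [Hw [Hjw [Hb1 [Hb2 [Hb3 [Hj2u Hj1]]]]]].
  pose proof (ell_ge1 u ltac:(lra)) as Hl1. pose proof (ell_le u ltac:(lra)) as Hl2.
  assert (Hr0 : 0 <= rho u) by (apply rho_nonneg; auto; lra).
  assert (HE0 : 0 < exp (- u * 200)) by apply exp_pos.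
  assert (Hww : ww u / 4 = / (80 * INR (jj u) * ell u)).
  { unfold ww. field. split; lra. }
  assert (HC0 : 0 <= Rmin CA CB) by (apply Rmin_glb; lra).
  destruct (Rle_or_lt u T0) as [HuT|HuT].
  - assert (Hr1 : rho u <= 1) by (apply rho_le1; auto; lra).
    assert (HE1 : exp (- u * 200) <= 1) by (rewrite <- exp_0; apply exp_le; lra).
    apply Rle_trans with (CA * 1 * 1).
    + apply Rmult_le_compat. nra. lra. apply Rmult_le_compat; try lra. apply Rmin_l. lra.
    + rewrite !Rmult_1_r. unfold CA. apply Rmult_le_compat_l. lra.
      apply Rle_trans with (b0 ^ (jj u)).
      * apply pow_le_exp. lra. apply INR_le. lra.
      * apply pow_le_base. lra. rewrite Hww. unfold b0. apply Rinv_le_contravar. nra.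
        apply Rmult_le_compat. nra. lra. apply Rmult_le_compat; lra. lra.
  - assert (Hrf : rho u <= ff u) by (apply rho_le_ff; auto; lra).
    apply Rle_trans with (CB * ff u * exp (- u * 200)).
    + apply Rmult_le_compat_r. lra. apply Rmult_le_compat; try lra. apply Rmin_r.
    + unfold CB, ff. replace (exp (gg T0) / 4 * exp (gg u - gg T0) * exp (- u * 200)) with (/ 4 * exp (gg u - u * 200)).
      2:{ replace (gg u - u * 200) with (gg T0 + (gg u - gg T0) + - u * 200) by ring.
          rewrite !exp_plus. field. }
      apply Rmult_le_compat_l. lra.
      rewrite <- (exp_ln (ww u / 4)). 2:{ rewrite Hww. apply Rinv_0_lt_compat. nra. }
      rewrite exp_pow_INR. apply exp_le.
      rewrite Hww, ln_Rinv by nra.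
      pose proof (caseB u HuT) as HB. unfold gg. lra.
Qed.
End Fin.

Import RhoPart NT Fin.


Theorem corollary2p3 :
  forall rho : R -> R, is_dickman rho ->
  exists c0 C : R, 1 <= c0 /\ 0 < C /\
  forall delta : nat -> R,
    (forall q, 0 < delta q < / 2) ->
    Un_cv (fun q => / delta q * (ln (ln (ln (INR q))) / ln (ln (INR q)))) 0 ->
    exists Q : nat, forall q : nat, (Q <= q)%nat -> prime (Z.of_nat q) ->
      C * rho (/ delta q) * Rpower c0 (- / delta q) * INR q
        <= INR (count_good q (delta q)).
Proof.
  intros rho Hd. destruct (final_ineq rho Hd) as [C [HC Hfin]].
  exists (exp 200), C. split. apply exp_ge1; lra. split; auto.
  intros delta Hdel Hcv.
  destruct (Hcv 1 Rlt_0_1) as [N HN].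
  destruct (nat_above (exp (exp 737280))) as [Q1 HQ1].
  exists (max N (max Q1 2)). intros q Hq Hp.
  pose proof (Hdel q) as Hdq.
  assert (HqN : (N <= q)%nat) by lia.
  assert (HqQ1 : INR Q1 <= INR q) by (apply le_INR; lia).
  assert (Hq2 : (2 <= q)%nat) by lia.
  assert (HqR : exp (exp 737280) < INR q) by lra.
  assert (Hlam : exp 737280 < ln (INR q)).
  { rewrite <- (ln_exp (exp 737280)). apply ln_increasing. apply exp_pos. lra. }
  assert (Hll : 737280 < ln (ln (INR q))).
  { rewrite <- (ln_exp 737280). apply ln_increasing. apply exp_pos. lra. }
  assert (Hlll : 1 <= ln (ln (ln (INR q)))).
  { apply ln_ge_of_exp. pose proof exp_le_3. lra. }
  set (u := / delta q).
  assert (Hu : 2 < u).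
  { unfold u. rewrite <- (Rinv_inv 2). apply Rinv_lt_contravar; lra. }
  specialize (HN q HqN). unfold R_dist in HN. fold u in HN.
  rewrite Rminus_0_r in HN.
  assert (Hul : u < ln (ln (INR q))).
  { set (ll := ln (ln (INR q))) in *. set (lll := ln ll) in *.
    assert (u * (lll / ll) < 1) by (pose proof (Rle_abs (u * (lll / ll))); lra).
    assert (u * lll < ll).
    { replace (u * lll) with (u * (lll / ll) * ll) by (field; lra). nra. }
    nra. }
  assert (Hbig : 2880 * u ^ 3 <= ln (INR q)).
  { apply Rle_trans with (2880 * ln (ln (INR q)) ^ 3).
    - apply Rmult_le_compat_l. lra. apply pow_le_base; lra.
    - pose proof (exp_pos 737280). rewrite <- (exp_ln (ln (INR q))) at 2 by lra. apply big_exp. lra. }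
  pose proof (count_bound' q (delta q) Hq2 Hdq Hbig) as Hcnt. fold u in Hcnt.
  pose proof (Hfin u Hu) as Hf.
  assert (HRp : Rpower (exp 200) (- u) = exp (- u * 200)) by (unfold Rpower; rewrite ln_exp; reflexivity).
  rewrite HRp.
  apply Rle_trans with (/ 4 * (ww u / 4) ^ jj u * INR q); auto.
  apply Rmult_le_compat_r. apply pos_INR. exact Hf.
Qed.
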